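(* Set $d^L=\beta\frac{v_0}{v_U}e^{-\mu a/v_0}g_0$, $d^U=\beta g_U\frac{v_U}{v_0}$, $Q=[d^L/\gamma,\,d^U/\gamma]$ and $R=\{\phi\in C^1:\phi([-r,0])\subset Q\}$. Then: (i) For all $\phi\in X_G$, $t_\phi=\infty$. (ii) For every neighbourhood $N$ of $Q$ in $\mathbb{R}$ and each $\phi\in X_G$ there exists $t(\phi,N)\in[0,\infty)$ with $x^\phi(t)\in N$ for all $t\ge t(\phi,N)$. (iii) If $\phi\in X_G\cap R$ then $x^\phi(t)\in Q$ for all $t\ge 0$. (iv) If $\phi\in X_G$ is strictly positive then $x^\phi(t)>0$ for all $t\ge -r$.
   Context: Constants $\beta,\mu,\gamma,a>0$. The function $g:\mathbb{R}\to(0,\infty)$ is continuously differentiable with $0<g_0:=\inf g(\mathbb{R})\le \sup g(\mathbb{R})=g_U<\infty$. The function $v:\mathbb{R}\to\mathbb{R}$ is continuously differentiable with $0<v_0\le v(x)\le v_U$ for all $x$. Fix $r>a/v_0$; $C=C([-r,0],\mathbb{R})$, $C^1=C^1([-r,0],\mathbb{R})$ with norm $|\phi|_1=\max|\phi|+\max|\phi'|$. Segments: $x_t(s)=x(t+s)$, $s\in[-r,0]$. For $\phi\in C$ let $\delta(\phi)$ be the unique $u\in(0,r)$ with $a=\int_{-u}^0 v(\phi(s))\,ds$. Define $G:C^1\to\mathbb{R}$ by $$G(\phi)=\beta e^{-\mu\delta(\phi)}\frac{v(\phi(0))}{v(\phi(-\delta(\phi)))}g(\phi(-\delta(\phi)))-\gamma\phi(0),$$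 and $X_G=\{\phi\in C^1:\phi'(0)=G(\phi)\}$. Each $\phi\in X_G$ determines a unique maximal continuously differentiable solution $x^\phi:[-r,t_\phi)\to\mathbb{R}$, $0<t_\phi\le\infty$, of $x'(t)=G(x_t)$ for $0<t<t_\phi$, $x_0=\phi$. *)

(* Defs.v *)
From Stdlib Require Import Reals Lra ClassicalEpsilon.
From Coquelicot Require Import Coquelicot.
Open Scope R_scope.

Definition has_deriv_within (D : R -> Prop) (f f' : R -> R) : Prop :=
  forall s, D s ->
    filterlim (fun h => (f (s + h) - f s) / h)
      (within (fun h => h <> 0 /\ D (s + h)) (locally 0))
      (locally (f' s)).

Definition cont_within (D : R -> Prop) (f : R -> R) : Prop :=
  forall s, D s -> filterlim f (within D (locally s)) (locally (f s)).

Definition C1_on (D : R -> Prop) (f df : R -> R) : Prop :=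
  has_deriv_within D f df /\ cont_within D df.

Definition C1_R (f : R -> R) : Prop :=
  exists f' : R -> R, forall x, is_derive f x (f' x) /\ continuous f' x.

Definition Iseg (r : R) : R -> Prop := fun s => - r <= s <= 0.

Definition seg (x : R -> R) (t : R) : R -> R := fun s => x (t + s).

Definition delta (a r : R) (v : R -> R) (phi : R -> R) : R :=
  epsilon (inhabits 0)
    (fun u => 0 < u < r /\ RInt (fun s => v (phi s)) (- u) 0 = a).

Definition G (beta mu gamma a r : R) (g v : R -> R) (phi : R -> R) : R :=
  let d := delta a r v phi in
  beta * exp (- mu * d) * (v (phi 0) / v (phi (- d))) * g (phi (- d))
  - gamma * phi 0.

Definition in_XG (beta mu gamma a r : R) (g v : R -> R) (phi dphi : R -> R) : Prop :=
  C1_on (Iseg r) phi dphi /\ dphi 0 = G beta mu gamma a r g v phi.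

Definition global_solution (beta mu gamma a r : R) (g v : R -> R)
    (phi x dx : R -> R) : Prop :=
  C1_on (fun t => - r <= t) x dx /\
  (forall s, Iseg r s -> x s = phi s) /\
  (forall t, 0 < t -> dx t = G beta mu gamma a r g v (seg x t)).

Definition nbhd_of_set (Q N : R -> Prop) : Prop :=
  exists O : R -> Prop, open O /\ (forall y, Q y -> O y) /\ (forall y, O y -> N y).

Definition is_inf (S : R -> Prop) (m : R) : Prop :=
  (forall y, S y -> m <= y) /\
  (forall m', (forall y, S y -> m' <= y) -> m' <= m).

(* Main.v *)
Require Import Defs.
From Stdlib Require Import Reals.
From Coquelicot Require Import Coquelicot.
From Stdlib Require Import Lra Lia ZArith ClassicalEpsilon FunctionalExtensionality PropExtensionality.
Open Scope R_scope.

Lemma ball_R (x y e : R) : ball x e y <-> Rabs (y - x) < e.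
Proof. unfold ball; simpl; unfold AbsRing_ball, minus, plus, opp, abs; simpl. tauto. Qed.

Lemma cont_eps (f : R -> R) x :
  (forall eps, 0 < eps -> exists d, 0 < d /\ forall y, Rabs (y - x) < d -> Rabs (f y - f x) < eps) ->
  continuous f x.
Proof.
  intros H. apply filterlim_locally. intros [e He]. simpl.
  destruct (H e He) as [d [Hd Hy]]. exists (mkposreal d Hd). intros y Hb.
  apply ball_R. apply Hy. apply ball_R. exact Hb.
Qed.

Lemma eps_cont (f : R -> R) x : continuous f x ->
  forall eps, 0 < eps -> exists d, 0 < d /\ forall y, Rabs (y - x) < d -> Rabs (f y - f x) < eps.
Proof.
  intros H e He. destruct (proj1 (filterlim_locally f (f x)) H (mkposreal e He)) as [[d Hd] Hy].
  exists d; split; [exact Hd|]. intros y Hy'. apply ball_R. apply Hy. apply ball_R. exact Hy'.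
Qed.

Lemma lip_cont (f : R -> R) K : (forall s1 s2, Rabs (f s1 - f s2) <= K * Rabs (s1 - s2)) ->
  forall x, continuous f x.
Proof.
  intros H x. apply cont_eps. intros e He.
  exists (e / (Rabs K + 1)). split. apply Rdiv_lt_0_compat; auto. pose proof (Rabs_pos K); lra.
  intros y Hy. eapply Rle_lt_trans. apply H.
  apply Rle_lt_trans with (Rabs K * Rabs (y - x)).
  apply Rmult_le_compat_r. apply Rabs_pos. apply RRle_abs.
  apply Rle_lt_trans with ((Rabs K + 1) * Rabs (y - x)). pose proof (Rabs_pos (y-x)); nra.
  assert (Hp : 0 < Rabs K + 1) by (pose proof (Rabs_pos K); lra).
  apply (Rmult_lt_compat_l (Rabs K + 1)) in Hy; auto.
  replace ((Rabs K + 1) * (e / (Rabs K + 1))) with e in Hy by (field; lra). lra.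
Qed.

Definition clamp (lo hi x : R) := Rmax lo (Rmin hi x).

Lemma clamp_in lo hi x : lo <= hi -> lo <= clamp lo hi x <= hi.
Proof. unfold clamp; intros; split. apply Rmax_l. apply Rmax_lub; auto. apply Rmin_l. Qed.

Lemma clamp_id lo hi x : lo <= x <= hi -> clamp lo hi x = x.
Proof. unfold clamp; intros. rewrite Rmin_right by lra. rewrite Rmax_right; lra. Qed.

Lemma clamp_lip lo hi x y : Rabs (clamp lo hi x - clamp lo hi y) <= Rabs (x - y).
Proof.
  unfold clamp, Rmax, Rmin.
  repeat (destruct Rle_dec); unfold Rabs; repeat destruct Rcase_abs; lra.
Qed.

Lemma clamp_cont lo hi x : continuous (clamp lo hi) x.
Proof. apply (lip_cont _ 1). intros. rewrite Rmult_1_l. apply clamp_lip. Qed.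

Lemma ex_RInt_cont (f : R -> R) a b : (forall x, continuous f x) -> ex_RInt f a b.
Proof. intros H; apply (ex_RInt_continuous (V:=R_CompleteNormedModule)); auto. Qed.

Lemma RInt_bound (f : R -> R) a b B :
  ex_RInt f a b -> (forall t, Rmin a b <= t <= Rmax a b -> Rabs (f t) <= B) ->
  Rabs (RInt f a b) <= B * Rabs (b - a).
Proof.
  intros Hex Hb. destruct (Rle_dec a b).
  - rewrite Rmin_left, Rmax_right in Hb by lra.
    rewrite (Rabs_right (b - a)) by lra. rewrite Rmult_comm. apply abs_RInt_le_const; auto.
  - apply Rnot_le_lt in n. rewrite Rmin_right, Rmax_left in Hb by lra.
    rewrite <- (opp_RInt_swap f). unfold opp; simpl. rewrite Rabs_Ropp.
    rewrite (Rabs_left (b - a)) by lra. replace (- (b - a)) with (a - b) by lra.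
    rewrite Rmult_comm. apply abs_RInt_le_const. lra. apply ex_RInt_swap; auto. auto. apply ex_RInt_swap; auto.
Qed.

Lemma half_pow_pos n : 0 < (/2) ^ n.
Proof. apply pow_lt; lra. Qed.

Lemma small_pow C eps : 0 < eps -> exists n, C * (/2)^n < eps.
Proof.
  intros He. destruct (pow_lt_1_zero (/2)) with (y := eps / (Rabs C + 1)) as [N HN].
  rewrite Rabs_right; lra. apply Rdiv_lt_0_compat; auto. pose proof (Rabs_pos C); lra.
  exists N. specialize (HN N (le_n _)). rewrite Rabs_right in HN by (left; apply half_pow_pos).
  pose proof (half_pow_pos N). pose proof (Rabs_pos C).
  apply Rle_lt_trans with (Rabs C * (/2)^N). apply Rmult_le_compat_r; [lra| apply RRle_abs].
  apply (Rmult_lt_compat_l (Rabs C + 1)) in HN; [|lra].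
  replace ((Rabs C + 1) * (eps / (Rabs C + 1))) with eps in HN by (field; lra). nra.
Qed.

Lemma zero_lim a b C : (forall n, a <= b + C * (/2)^n) -> a <= b.
Proof.
  intros H. apply Rle_plus_epsilon. intros e He. destruct (small_pow C e He) as [n Hn].
  specialize (H n). lra.
Qed.

Lemma comp_cont (f : R -> R -> R -> R) L X Y t :
  0 <= L ->
  (forall t x y x' y', Rabs (f t x y - f t x' y') <= L * (Rabs (x - x') + Rabs (y - y'))) ->
  (forall x y t, continuous (fun s => f s x y) t) ->
  continuous X t -> continuous Y t -> continuous (fun s => f s (X s) (Y s)) t.
Proof.
  intros HL Hl Hc HX HY. apply cont_eps. intros e He.
  destruct (eps_cont _ _ (Hc (X t) (Y t) t) (e/2)) as [d1 [Hd1 H1]]; [lra|].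
  destruct (eps_cont _ _ HX (e/(4*(L+1)))) as [d2 [Hd2 H2]]. apply Rdiv_lt_0_compat; lra.
  destruct (eps_cont _ _ HY (e/(4*(L+1)))) as [d3 [Hd3 H3]]. apply Rdiv_lt_0_compat; lra.
  exists (Rmin d1 (Rmin d2 d3)). split. repeat apply Rmin_pos; auto.
  intros y Hy. assert (Ha: Rabs (y - t) < d1) by (eapply Rlt_le_trans; [exact Hy| apply Rmin_l]).
  assert (Hb: Rabs (y - t) < d2) by (eapply Rlt_le_trans; [exact Hy| eapply Rle_trans; [apply Rmin_r| apply Rmin_l]]).
  assert (Hc': Rabs (y - t) < d3) by (eapply Rlt_le_trans; [exact Hy| eapply Rle_trans; [apply Rmin_r| apply Rmin_r]]).
  specialize (H1 y Ha). specialize (H2 y Hb). specialize (H3 y Hc'). simpl in H1.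
  specialize (Hl y (X y) (Y y) (X t) (Y t)).
  assert (HLe : L * (Rabs (X y - X t) + Rabs (Y y - Y t)) <= L * (2 * (e / (4 * (L + 1))))).
  { apply Rmult_le_compat_l; lra. }
  assert (L * (2 * (e / (4 * (L + 1)))) < e / 2).
  { replace (L * (2 * (e / (4 * (L + 1))))) with ((L / (L+1)) * (e / 2)) by (field; lra).
    assert (L / (L+1) < 1). { apply (Rmult_lt_reg_r (L+1)). lra. field_simplify; lra. }
    nra. }
  replace (f y (X y) (Y y) - f t (X t) (Y t)) with
    ((f y (X y) (Y y) - f y (X t) (Y t)) + (f y (X t) (Y t) - f t (X t) (Y t))) by ring.
  eapply Rle_lt_trans. apply Rabs_triang. lra.
Qed.

Definition picard (t0 k x0 y0 : R) (f1 f2 : R -> R -> R -> R) : nat -> (R -> R) * (R -> R) :=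
  fix it n := match n with
  | O => (fun _ => x0, fun _ => y0)
  | S n => let p := it n in
      (fun t => x0 + RInt (fun s => f1 s (fst p s) (snd p s)) t0 (clamp t0 (t0 + k) t),
       fun t => y0 + RInt (fun s => f2 s (fst p s) (snd p s)) t0 (clamp t0 (t0 + k) t))
  end.

Lemma Rplus_minus_l3 (u w : R) : u + w - u = w. Proof. ring. Qed.

Lemma Rplus_minus_l4 (a u : R) : a + u - a = u. Proof. ring. Qed.
Lemma Rplus_minus_cancel (a u w : R) : a + u - (a + w) = u - w. Proof. ring. Qed.

Lemma RInt_diff_bound (F : R -> R) t0 c1 c2 B :
  (forall x, continuous F x) -> (forall s, Rabs (F s) <= B) ->
  Rabs ((RInt F t0 c1) - (RInt F t0 c2)) <= B * Rabs (c1 - c2).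
Proof.
  intros Hc Hb.
  assert (E : RInt F t0 c2 + RInt F c2 c1 = RInt F t0 c1).
  { apply (RInt_Chasles (V:=R_CompleteNormedModule)); apply ex_RInt_cont; auto. }
  rewrite <- E. rewrite Rplus_minus_l3.
  apply RInt_bound. apply ex_RInt_cont; auto. auto.
Qed.

Lemma RInt_sub (F G : R -> R) a b : (forall x, continuous F x) -> (forall x, continuous G x) ->
  RInt F a b - RInt G a b = RInt (fun s => F s - G s) a b.
Proof.
  intros HF HG. symmetry. apply (RInt_minus (V:=R_CompleteNormedModule)); apply ex_RInt_cont; auto.
Qed.

Lemma cont_minus (F G : R -> R) x : continuous F x -> continuous G x -> continuous (fun s => F s - G s) x.
Proof. intros; apply (continuous_minus (V:=R_NormedModule)); auto. Qed.

Lemma lip_step (F : R -> R) a t0 lo hi B s1 s2 :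
  (forall x, continuous F x) -> (forall s, Rabs (F s) <= B) -> 0 <= B ->
  Rabs (a + RInt F t0 (clamp lo hi s1) - (a + RInt F t0 (clamp lo hi s2))) <= B * Rabs (s1 - s2).
Proof.
  intros Hc Hb HB. replace (a + RInt F t0 (clamp lo hi s1) - (a + RInt F t0 (clamp lo hi s2)))
    with (RInt F t0 (clamp lo hi s1) - RInt F t0 (clamp lo hi s2)) by ring.
  eapply Rle_trans. apply RInt_diff_bound; auto. apply Rmult_le_compat_l; auto. apply clamp_lip.
Qed.

Section ODE.
Variables (t0 k L B x0 y0 : R) (f1 f2 : R -> R -> R -> R).
Hypotheses (hk : 0 < k) (hL : 0 <= L) (hkL : 4 * k * L <= 1)
  (hb1 : forall t x y, Rabs (f1 t x y) <= B) (hb2 : forall t x y, Rabs (f2 t x y) <= B)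
  (hl1 : forall t x y x' y', Rabs (f1 t x y - f1 t x' y') <= L * (Rabs (x - x') + Rabs (y - y')))
  (hl2 : forall t x y x' y', Rabs (f2 t x y - f2 t x' y') <= L * (Rabs (x - x') + Rabs (y - y')))
  (hc1 : forall x y t, continuous (fun s => f1 s x y) t)
  (hc2 : forall x y t, continuous (fun s => f2 s x y) t).

Let P := picard t0 k x0 y0 f1 f2.
Let Xn n := fst (P n).
Let Yn n := snd (P n).

Lemma B_pos : 0 <= B.
Proof. pose proof (hb1 0 0 0). pose proof (Rabs_pos (f1 0 0 0)). lra. Qed.

Lemma it_lip n : (forall s1 s2, Rabs (Xn n s1 - Xn n s2) <= B * Rabs (s1 - s2)) /\
                 (forall s1 s2, Rabs (Yn n s1 - Yn n s2) <= B * Rabs (s1 - s2)).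
Proof.
  pose proof B_pos.
  induction n as [|n [IH1 IH2]].
  - split; intros; simpl; unfold Xn, Yn; simpl; rewrite Rminus_diag, Rabs_R0;
      apply Rmult_le_pos; auto; apply Rabs_pos.
  - pose proof (lip_cont _ _ IH1) as C1. pose proof (lip_cont _ _ IH2) as C2.
    split; intros s1 s2; unfold Xn, Yn; simpl; apply lip_step; auto;
      intros; apply (comp_cont _ L); auto.
Qed.

Lemma Fn_cont1 n x : continuous (fun s => f1 s (Xn n s) (Yn n s)) x.
Proof. destruct (it_lip n). apply (comp_cont _ L); auto; eapply lip_cont; eauto. Qed.
Lemma Fn_cont2 n x : continuous (fun s => f2 s (Xn n s) (Yn n s)) x.
Proof. destruct (it_lip n). apply (comp_cont _ L); auto; eapply lip_cont; eauto. Qed.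

Lemma clamp_k t : Rabs (clamp t0 (t0 + k) t - t0) <= k.
Proof. pose proof (clamp_in t0 (t0+k) t). rewrite Rabs_right; lra. Qed.

Lemma it_contr n t : Rabs (Xn (S n) t - Xn n t) + Rabs (Yn (S n) t - Yn n t) <= 2 * B * k * (/2)^n.
Proof.
  revert t. induction n as [|n IH]; intros t.
  - unfold Xn, Yn; simpl. rewrite Rmult_1_r.
    rewrite !Rplus_minus_l4.
    pose proof (clamp_k t). pose proof B_pos.
    assert (forall f : R -> R -> R -> R, (forall t x y, Rabs (f t x y) <= B) ->
      (forall x y t, continuous (fun s => f s x y) t) ->
      Rabs (RInt (fun s => f s x0 y0) t0 (clamp t0 (t0 + k) t)) <= B * k).
    { intros f Hb Hc. eapply Rle_trans. apply RInt_bound. apply ex_RInt_cont; auto.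
      intros; auto. apply Rmult_le_compat_l; auto. }
    pose proof (H1 f1 hb1 hc1). pose proof (H1 f2 hb2 hc2). lra.
  - assert (Hgen : forall f : R -> R -> R -> R,
      (forall t x y x' y', Rabs (f t x y - f t x' y') <= L * (Rabs (x - x') + Rabs (y - y'))) ->
      (forall m x, continuous (fun s => f s (Xn m s) (Yn m s)) x) ->
      Rabs (RInt (fun s => f s (Xn (S n) s) (Yn (S n) s)) t0 (clamp t0 (t0 + k) t)
          - RInt (fun s => f s (Xn n s) (Yn n s)) t0 (clamp t0 (t0 + k) t))
        <= L * (2 * B * k * (/2)^n) * k).
    { intros f Hl Hc. rewrite RInt_sub by auto.
      apply Rle_trans with (L * (2 * B * k * (/2)^n) * Rabs (clamp t0 (t0 + k) t - t0)).
      apply RInt_bound. apply ex_RInt_cont. intros; apply cont_minus; auto.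
      intros s _. eapply Rle_trans. apply Hl. apply Rmult_le_compat_l; auto.
      apply Rmult_le_compat_l. apply Rmult_le_pos; auto.
      apply Rmult_le_pos. apply Rmult_le_pos. apply Rmult_le_pos; [lra| apply B_pos]. lra.
        left; apply half_pow_pos.
      apply clamp_k. }
    pose proof (Hgen f1 hl1 Fn_cont1) as G1. pose proof (Hgen f2 hl2 Fn_cont2) as G2.
    assert (E1: Xn (S (S n)) t = x0 + RInt (fun s => f1 s (Xn (S n) s) (Yn (S n) s)) t0 (clamp t0 (t0+k) t)) by reflexivity.
    assert (E2: Xn (S n) t = x0 + RInt (fun s => f1 s (Xn n s) (Yn n s)) t0 (clamp t0 (t0+k) t)) by reflexivity.
    assert (E3: Yn (S (S n)) t = y0 + RInt (fun s => f2 s (Xn (S n) s) (Yn (S n) s)) t0 (clamp t0 (t0+k) t)) by reflexivity.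
    assert (E4: Yn (S n) t = y0 + RInt (fun s => f2 s (Xn n s) (Yn n s)) t0 (clamp t0 (t0+k) t)) by reflexivity.
    rewrite E1, E2, E3, E4.
    rewrite !Rplus_minus_cancel.
    assert (L * (2 * B * k * (/2)^n) * k * 2 <= 2 * B * k * (/ 2 * (/ 2) ^ n)).
    { pose proof B_pos. pose proof (half_pow_pos n).
      assert (0 <= B * k * (/2)^n) by (apply Rmult_le_pos; [apply Rmult_le_pos|]; lra).
      nra. }
    change ((/2)^(S n)) with (/2 * (/2)^n). lra.
Qed.

Lemma it_cauchy n j t :
  Rabs (Xn (n + j) t - Xn n t) <= 4 * B * k * ((/2)^n - (/2)^(n+j)) /\
  Rabs (Yn (n + j) t - Yn n t) <= 4 * B * k * ((/2)^n - (/2)^(n+j)).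
Proof.
  induction j as [|j [IH1 IH2]].
  - rewrite Nat.add_0_r, !Rminus_diag, Rabs_R0, Rmult_0_r. lra.
  - rewrite Nat.add_succ_r. pose proof (it_contr (n + j) t).
    change ((/2)^(S (n+j))) with (/2 * (/2)^(n+j)).
    pose proof (Rabs_pos (Xn (S (n + j)) t - Xn (n + j) t)).
    pose proof (Rabs_pos (Yn (S (n + j)) t - Yn (n + j) t)).
    split.
    + replace (Xn (S (n + j)) t - Xn n t) with ((Xn (S (n + j)) t - Xn (n+j) t) + (Xn (n + j) t - Xn n t)) by ring.
      eapply Rle_trans. apply Rabs_triang. lra.
    + replace (Yn (S (n + j)) t - Yn n t) with ((Yn (S (n + j)) t - Yn (n+j) t) + (Yn (n + j) t - Yn n t)) by ring.
      eapply Rle_trans. apply Rabs_triang. lra.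
Qed.

Lemma it_cauchy' n m t : (n <= m)%nat ->
  Rabs (Xn m t - Xn n t) <= 4 * B * k * (/2)^n /\ Rabs (Yn m t - Yn n t) <= 4 * B * k * (/2)^n.
Proof.
  intros Hnm. replace m with (n + (m - n))%nat by lia.
  destruct (it_cauchy n (m - n) t). pose proof (half_pow_pos (n + (m - n))).
  pose proof B_pos. assert (0 <= 4 * B * k) by (apply Rmult_le_pos; lra).
  split; (eapply Rle_trans; [eassumption|]); apply Rmult_le_compat_l; lra.
Qed.

Lemma cauchy_gen (u : nat -> R) C : (forall n m, (n <= m)%nat -> Rabs (u m - u n) <= C * (/2)^n) ->
  Cauchy_crit u.
Proof.
  intros H eps He. destruct (small_pow (2 * C) eps He) as [N HN]. exists N. intros n m Hn Hm.
  unfold Rdist. pose proof (H N n Hn). pose proof (H N m Hm).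
  replace (u n - u m) with ((u n - u N) - (u m - u N)) by ring.
  eapply Rle_lt_trans. apply Rabs_triang. rewrite Rabs_Ropp. lra.
Qed.

Lemma cauchyX t : Cauchy_crit (fun n => Xn n t).
Proof. apply (cauchy_gen _ (4 * B * k)). intros. apply it_cauchy'; auto. Qed.
Lemma cauchyY t : Cauchy_crit (fun n => Yn n t).
Proof. apply (cauchy_gen _ (4 * B * k)). intros. apply it_cauchy'; auto. Qed.

Definition Xl t := proj1_sig (Rcomplete.R_complete _ (cauchyX t)).
Definition Yl t := proj1_sig (Rcomplete.R_complete _ (cauchyY t)).

Lemma lim_bound (u : nat -> R) l C n : Un_cv u l -> (forall m, (n <= m)%nat -> Rabs (u m - u n) <= C) ->
  Rabs (l - u n) <= C.
Proof.
  intros Hl H. apply Rle_plus_epsilon. intros e He. destruct (Hl e He) as [N HN].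
  specialize (HN (max N n) (Nat.le_max_l _ _)). specialize (H (max N n) (Nat.le_max_r _ _)).
  unfold Rdist in HN. replace (l - u n) with ((u (max N n) - u n) - (u (max N n) - l)) by ring.
  eapply Rle_trans. apply Rabs_triang. rewrite Rabs_Ropp. lra.
Qed.

Lemma Xl_bound n t : Rabs (Xl t - Xn n t) <= 4 * B * k * (/2)^n.
Proof.
  unfold Xl. destruct (Rcomplete.R_complete _ (cauchyX t)) as [l Hl]. simpl.
  apply (lim_bound (fun n => Xn n t)); auto. intros; apply it_cauchy'; auto.
Qed.
Lemma Yl_bound n t : Rabs (Yl t - Yn n t) <= 4 * B * k * (/2)^n.
Proof.
  unfold Yl. destruct (Rcomplete.R_complete _ (cauchyY t)) as [l Hl]. simpl.
  apply (lim_bound (fun n => Yn n t)); auto. intros; apply it_cauchy'; auto.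
Qed.

Lemma lim_lip (Z : R -> R) (Zn : nat -> R -> R) C :
  (forall n t, Rabs (Z t - Zn n t) <= C * (/2)^n) ->
  (forall n s1 s2, Rabs (Zn n s1 - Zn n s2) <= B * Rabs (s1 - s2)) ->
  forall s1 s2, Rabs (Z s1 - Z s2) <= B * Rabs (s1 - s2).
Proof.
  intros H1 H2 s1 s2. apply (zero_lim _ _ (2 * C)). intros n.
  replace (Z s1 - Z s2) with ((Z s1 - Zn n s1) - (Z s2 - Zn n s2) + (Zn n s1 - Zn n s2)) by ring.
  eapply Rle_trans. apply Rabs_triang. eapply Rle_trans. apply Rplus_le_compat_r. apply Rabs_triang.
  rewrite Rabs_Ropp. pose proof (H1 n s1). pose proof (H1 n s2). pose proof (H2 n s1 s2). lra.
Qed.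

Lemma Xl_lip s1 s2 : Rabs (Xl s1 - Xl s2) <= B * Rabs (s1 - s2).
Proof. apply (lim_lip Xl Xn (4 * B * k)). apply Xl_bound. intros; apply it_lip. Qed.
Lemma Yl_lip s1 s2 : Rabs (Yl s1 - Yl s2) <= B * Rabs (s1 - s2).
Proof. apply (lim_lip Yl Yn (4 * B * k)). apply Yl_bound. intros; apply it_lip. Qed.

Lemma int_eq_gen (f : R -> R -> R -> R) (Zl : R -> R) (Zn : nat -> R -> R) z0 t :
  t0 <= t <= t0 + k ->
  (forall t x y x' y', Rabs (f t x y - f t x' y') <= L * (Rabs (x - x') + Rabs (y - y'))) ->
  (forall x y t, continuous (fun s => f s x y) t) ->
  (forall n t, Rabs (Zl t - Zn n t) <= 4 * B * k * (/2)^n) ->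
  (forall n, Zn (S n) t = z0 + RInt (fun s => f s (Xn n s) (Yn n s)) t0 (clamp t0 (t0 + k) t)) ->
  Zl t = z0 + RInt (fun s => f s (Xl s) (Yl s)) t0 t.
Proof.
  intros Ht Hl Hc Hb Hrec.
  assert (HF : forall x, continuous (fun s => f s (Xl s) (Yl s)) x).
  { intros; apply (comp_cont _ L); auto; eapply lip_cont; [apply Xl_lip| apply Yl_lip]. }
  assert (HFn : forall n x, continuous (fun s => f s (Xn n s) (Yn n s)) x).
  { intros; destruct (it_lip n); apply (comp_cont _ L); auto; eapply lip_cont; eauto. }
  rewrite clamp_id in Hrec by lra.
  cut (Rabs (Zl t - (z0 + RInt (fun s => f s (Xl s) (Yl s)) t0 t)) <= 0).
  { intros H. pose proof (Rabs_pos (Zl t - (z0 + RInt (fun s => f s (Xl s) (Yl s)) t0 t))).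
    assert (Rabs (Zl t - (z0 + RInt (fun s => f s (Xl s) (Yl s)) t0 t)) = 0) by lra.
    apply Rabs_eq_0 in H1. lra. }
  apply (zero_lim _ _ (2 * B * k + L * (8 * B * k) * k)). intros n.
  rewrite Rplus_0_l.
  replace (Zl t - (z0 + RInt (fun s => f s (Xl s) (Yl s)) t0 t)) with
    ((Zl t - Zn (S n) t) + (RInt (fun s => f s (Xn n s) (Yn n s)) t0 t - RInt (fun s => f s (Xl s) (Yl s)) t0 t))
    by (rewrite Hrec; ring).
  eapply Rle_trans. apply Rabs_triang.
  pose proof (Hb (S n) t) as H1. change ((/2)^(S n)) with (/2 * (/2)^n) in H1.
  assert (H2 : Rabs (RInt (fun s => f s (Xn n s) (Yn n s)) t0 t - RInt (fun s => f s (Xl s) (Yl s)) t0 t)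
     <= L * (8 * B * k * (/2)^n) * Rabs (t - t0)).
  { rewrite RInt_sub by auto. apply RInt_bound. apply ex_RInt_cont. intros; apply cont_minus; auto.
    intros s _. eapply Rle_trans. apply Hl. apply Rmult_le_compat_l; auto.
    pose proof (Xl_bound n s). pose proof (Yl_bound n s).
    rewrite (Rabs_minus_sym (Xn n s)), (Rabs_minus_sym (Yn n s)). lra. }
  rewrite (Rabs_right (t - t0)) in H2 by lra.
  assert (L * (8 * B * k * (/ 2) ^ n) * (t - t0) <= L * (8 * B * k) * k * (/2)^n).
  { pose proof B_pos. pose proof (half_pow_pos n).
    assert (0 <= L * (8 * B * k * (/ 2) ^ n)) by (apply Rmult_le_pos; auto; apply Rmult_le_pos; [|lra]; apply Rmult_le_pos; lra).
    replace (L * (8 * B * k) * k * (/2)^n) with (L * (8 * B * k * (/ 2) ^ n) * k) by ring.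
    apply Rmult_le_compat_l; lra. }
  lra.
Qed.

Lemma ode_main : exists X Y : R -> R,
    (forall s1 s2, Rabs (X s1 - X s2) <= B * Rabs (s1 - s2)) /\
    (forall s1 s2, Rabs (Y s1 - Y s2) <= B * Rabs (s1 - s2)) /\
    (forall t, t0 <= t <= t0 + k ->
       X t = x0 + RInt (fun s => f1 s (X s) (Y s)) t0 t /\
       Y t = y0 + RInt (fun s => f2 s (X s) (Y s)) t0 t).
Proof.
  exists Xl, Yl. split; [apply Xl_lip|]. split; [apply Yl_lip|].
  intros t Ht. split.
  - apply (int_eq_gen f1 Xl Xn x0 t Ht hl1 hc1 Xl_bound). intros; reflexivity.
  - apply (int_eq_gen f2 Yl Yn y0 t Ht hl2 hc2 Yl_bound). intros; reflexivity.
Qed.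

End ODE.

Lemma ode_exists (t0 k L B x0 y0 : R) (f1 f2 : R -> R -> R -> R) :
  0 < k -> 0 <= L -> 4 * k * L <= 1 ->
  (forall t x y, Rabs (f1 t x y) <= B) -> (forall t x y, Rabs (f2 t x y) <= B) ->
  (forall t x y x' y', Rabs (f1 t x y - f1 t x' y') <= L * (Rabs (x - x') + Rabs (y - y'))) ->
  (forall t x y x' y', Rabs (f2 t x y - f2 t x' y') <= L * (Rabs (x - x') + Rabs (y - y'))) ->
  (forall x y t, continuous (fun s => f1 s x y) t) ->
  (forall x y t, continuous (fun s => f2 s x y) t) ->
  exists X Y : R -> R,
    (forall s1 s2, Rabs (X s1 - X s2) <= B * Rabs (s1 - s2)) /\
    (forall s1 s2, Rabs (Y s1 - Y s2) <= B * Rabs (s1 - s2)) /\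
    (forall t, t0 <= t <= t0 + k ->
       X t = x0 + RInt (fun s => f1 s (X s) (Y s)) t0 t /\
       Y t = y0 + RInt (fun s => f2 s (X s) (Y s)) t0 t).
Proof. intros. eapply ode_main; eauto. Qed.

Lemma deriv_zexp (y : R -> R) dy C g s :
  is_derive y s dy -> is_derive (fun u => (y u - C) * exp (g * u)) s ((dy + g * (y s - C)) * exp (g * s)).
Proof.
  intros H.
  assert (H1 : is_derive (fun u => y u - C) s dy).
  { apply is_derive_Reals. apply is_derive_Reals in H.
    replace dy with (dy - 0) by ring. apply (derivable_pt_lim_minus y (fun _ => C)); auto.
    apply derivable_pt_lim_const. }
  assert (H2 : is_derive (fun u => exp (g * u)) s (g * exp (g * s))).
  { apply is_derive_Reals.
    replace (g * exp (g * s)) with (exp (g * s) * g) by ring.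
    apply (derivable_pt_lim_comp (fun u => g * u) exp).
    apply is_derive_Reals. assert (Hg : is_derive (fun u : R => g * u) s (g * 1)).
    { apply is_derive_scal. apply (is_derive_id (K:=R_AbsRing)). }
    rewrite Rmult_1_r in Hg. exact Hg.
    apply derivable_pt_lim_exp. }
  apply is_derive_Reals. apply is_derive_Reals in H1. apply is_derive_Reals in H2.
  replace ((dy + g * (y s - C)) * exp (g * s)) with (dy * exp (g * s) + (y s - C) * (g * exp (g * s))) by ring.
  apply (derivable_pt_lim_mult (fun u => y u - C) (fun u => exp (g * u))); auto.
Qed.

Lemma compare_up (y F : R -> R) gam t0 t1 Fu :
  0 < gam -> t0 <= t1 ->
  (forall s, t0 < s < t1 -> is_derive y s (F s - gam * y s)) ->
  (forall s, t0 <= s <= t1 -> continuous y s) ->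
  (forall s, t0 < s < t1 -> F s <= Fu) ->
  y t1 <= Fu / gam + (y t0 - Fu / gam) * exp (- gam * (t1 - t0)).
Proof.
  intros Hg Ht Hd Hc HF.
  set (z := fun u => (y u - Fu / gam) * exp (gam * u)).
  set (dz := fun u => if Rlt_dec t0 u then if Rlt_dec u t1 then (F u - Fu) * exp (gam * u) else 0 else 0).
  destruct (MVT_gen z t0 t1 dz) as [c [Hc1 Hc2]].
  - rewrite Rmin_left, Rmax_right by lra. intros x Hx. unfold dz.
    destruct (Rlt_dec t0 x); [|lra]. destruct (Rlt_dec x t1); [|lra].
    replace ((F x - Fu) * exp (gam * x)) with ((F x - gam * y x + gam * (y x - Fu / gam)) * exp (gam * x))
      by (field; lra).
    apply deriv_zexp. auto.
  - rewrite Rmin_left, Rmax_right by lra. intros x Hx. unfold z.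
    apply (continuity_pt_mult (fun u => y u - Fu/gam) (fun u => exp (gam*u))).
    apply (continuity_pt_minus y (fun _ => Fu/gam)). apply continuity_pt_filterlim. apply (Hc x Hx).
    apply continuity_pt_filterlim. apply continuous_const.
    apply continuity_pt_filterlim. apply (ex_derive_continuous (K:=R_AbsRing) (V:=R_NormedModule) (fun u => exp (gam*u))). auto_derive. auto.
  - assert (dz c <= 0).
    { unfold dz. destruct (Rlt_dec t0 c); [|lra]. destruct (Rlt_dec c t1); [|lra].
      pose proof (HF c (conj r r0)). pose proof (exp_pos (gam * c)). nra. }
    assert (z t1 <= z t0) by nra.
    unfold z in H0. pose proof (exp_pos (gam * t1)).
    assert (E : exp (- gam * (t1 - t0)) = exp (gam * t0) / exp (gam * t1)).
    { replace (gam * t0) with (- gam * (t1 - t0) + gam * t1) by ring. rewrite exp_plus. field.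
      apply Rgt_not_eq, exp_pos. } 
    rewrite E.
    apply (Rmult_le_reg_r (exp (gam * t1))); auto.
    replace ((Fu / gam + (y t0 - Fu / gam) * (exp (gam * t0) / exp (gam * t1))) * exp (gam * t1))
      with (Fu / gam * exp (gam * t1) + (y t0 - Fu / gam) * exp (gam * t0)) by (field; lra).
    lra.
Qed.

Lemma compare_down (y F : R -> R) gam t0 t1 Fl :
  0 < gam -> t0 <= t1 ->
  (forall s, t0 < s < t1 -> is_derive y s (F s - gam * y s)) ->
  (forall s, t0 <= s <= t1 -> continuous y s) ->
  (forall s, t0 < s < t1 -> Fl <= F s) ->
  Fl / gam + (y t0 - Fl / gam) * exp (- gam * (t1 - t0)) <= y t1.
Proof.
  intros Hg Ht Hd Hc HF.
  pose proof (compare_up (fun u => - y u) (fun u => - F u) gam t0 t1 (- Fl) Hg Ht).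
  assert (- y t1 <= - Fl / gam + (- y t0 - - Fl / gam) * exp (- gam * (t1 - t0))).
  { apply H.
    - intros s Hs. replace (- F s - gam * - y s) with (- (F s - gam * y s)) by ring.
      apply is_derive_Reals. apply (derivable_pt_lim_opp y). apply is_derive_Reals. auto.
    - intros s Hs. apply (continuous_opp (V:=R_NormedModule)). auto.
    - intros s Hs. specialize (HF s Hs). lra. }
  replace (- Fl / gam + (- y t0 - - Fl / gam) * exp (- gam * (t1 - t0))) with
    (- (Fl / gam + (y t0 - Fl / gam) * exp (- gam * (t1 - t0)))) in H0 by (field; lra).
  lra.
Qed.

Definition wd (D : R -> Prop) (f : R -> R) (l s : R) : Prop :=
  forall eps, 0 < eps -> exists d, 0 < d /\ forall h, h <> 0 -> Rabs h < d -> D (s + h) ->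
    Rabs ((f (s + h) - f s) / h - l) < eps.

Definition wc (D : R -> Prop) (f : R -> R) (s : R) : Prop :=
  forall eps, 0 < eps -> exists d, 0 < d /\ forall y, Rabs (y - s) < d -> D y ->
    Rabs (f y - f s) < eps.

Lemma wd_of (D : R -> Prop) f l s :
  filterlim (fun h => (f (s + h) - f s) / h) (within (fun h => h <> 0 /\ D (s + h)) (locally 0)) (locally l) ->
  wd D f l s.
Proof.
  intros H e He. destruct (proj1 (filterlim_locally _ l) H (mkposreal e He)) as [[d Hd] Hy].
  exists d. split; [exact Hd|]. intros h Hh Hhd HD. apply ball_R. apply Hy. apply ball_R. rewrite Rminus_0_r; auto.
  auto.
Qed.

Lemma of_wd (D : R -> Prop) f l s : wd D f l s ->
  filterlim (fun h => (f (s + h) - f s) / h) (within (fun h => h <> 0 /\ D (s + h)) (locally 0)) (locally l).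
Proof.
  intros H. apply filterlim_locally. intros [e He]. destruct (H e He) as [d [Hd Hy]].
  exists (mkposreal d Hd). intros h Hb [Hh HD]. apply ball_R. apply Hy; auto. apply ball_R in Hb.
  simpl in Hb. replace h with (h - 0) by ring; auto.
Qed.

Lemma wc_of (D : R -> Prop) f s :
  filterlim f (within D (locally s)) (locally (f s)) -> wc D f s.
Proof.
  intros H e He. destruct (proj1 (filterlim_locally _ _) H (mkposreal e He)) as [[d Hd] Hy].
  exists d. split; [exact Hd|]. intros y Hyd HD. apply ball_R. apply Hy. apply ball_R. auto. auto.
Qed.

Lemma of_wc (D : R -> Prop) f s : wc D f s ->
  filterlim f (within D (locally s)) (locally (f s)).
Proof.
  intros H. apply filterlim_locally. intros [e He]. destruct (H e He) as [d [Hd Hy]].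
  exists (mkposreal d Hd). intros y Hb HD. apply ball_R. apply Hy; [|exact HD]. apply ball_R in Hb. exact Hb.
Qed.

Lemma wd_derive (D : R -> Prop) f l s rho : 0 < rho -> (forall y, Rabs (y - s) < rho -> D y) ->
  wd D f l s -> is_derive f s l.
Proof.
  intros Hr HD H. apply is_derive_Reals. intros e He. destruct (H e He) as [d [Hd Hy]].
  exists (mkposreal (Rmin d rho) (Rmin_pos _ _ Hd Hr)). simpl. intros h Hh Hhd.
  apply Hy; auto. eapply Rlt_le_trans; [exact Hhd| apply Rmin_l].
  apply HD. replace (s + h - s) with h by ring. eapply Rlt_le_trans; [exact Hhd| apply Rmin_r].
Qed.

Lemma derive_wd (D : R -> Prop) f l s : is_derive f s l -> wd D f l s.
Proof.
  intros H. apply is_derive_Reals in H. intros e He. destruct (H e He) as [[d Hd] Hy].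
  exists d. split; auto.
Qed.

Lemma wc_cont (D : R -> Prop) f s rho : 0 < rho -> (forall y, Rabs (y - s) < rho -> D y) ->
  wc D f s -> continuous f s.
Proof.
  intros Hr HD H. apply cont_eps. intros e He. destruct (H e He) as [d [Hd Hy]].
  exists (Rmin d rho). split. apply Rmin_pos; auto. intros y Hyd. apply Hy.
  eapply Rlt_le_trans; [exact Hyd| apply Rmin_l]. apply HD. eapply Rlt_le_trans; [exact Hyd| apply Rmin_r].
Qed.

Lemma cont_wc (D : R -> Prop) f s : continuous f s -> wc D f s.
Proof.
  intros H e He. destruct (eps_cont f s H e He) as [d [Hd Hy]]. exists d; split; auto.
Qed.

Lemma wd_wc (D : R -> Prop) f l s : wd D f l s -> wc D f s.
Proof.
  intros H e He. destruct (H 1 Rlt_0_1) as [d [Hd Hy]].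
  exists (Rmin d (e / (Rabs l + 1 + 1))). split.
  apply Rmin_pos; auto. apply Rdiv_lt_0_compat; auto. pose proof (Rabs_pos l); lra.
  intros y Hyd HD. destruct (Req_dec y s) as [E|E]. subst. rewrite Rminus_diag, Rabs_R0; auto.
  specialize (Hy (y - s)). replace (s + (y - s)) with y in Hy by ring.
  assert (Hq : Rabs ((f y - f s) / (y - s) - l) < 1). apply Hy; auto. lra.
    eapply Rlt_le_trans; [exact Hyd| apply Rmin_l].
  assert (Hn : y - s <> 0) by lra.
  replace (f y - f s) with (((f y - f s) / (y - s) - l + l) * (y - s)) by (field; auto).
  rewrite Rabs_mult. 
  assert (Rabs ((f y - f s) / (y - s) - l + l) <= Rabs l + 1 + 1).
  { eapply Rle_trans. apply Rabs_triang. lra. }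
  assert (Hz : Rabs (y - s) < e / (Rabs l + 1 + 1)). eapply Rlt_le_trans; [exact Hyd| apply Rmin_r].
  pose proof (Rabs_pos l). pose proof (Rabs_pos (y - s)).
  apply Rle_lt_trans with ((Rabs l + 1 + 1) * Rabs (y - s)). apply Rmult_le_compat_r; auto.
  apply (Rmult_lt_compat_l (Rabs l + 1 + 1)) in Hz; [|lra].
  replace ((Rabs l + 1 + 1) * (e / (Rabs l + 1 + 1))) with e in Hz by (field; lra). lra.
Qed.

Lemma int_deriv (X F : R -> R) c0 t0 lo hi t : lo < t < hi ->
  (forall u, lo <= u <= hi -> X u = c0 + RInt F t0 u) -> (forall x, continuous F x) ->
  is_derive X t (F t).
Proof.
  intros Ht HX HF.
  assert (H1 : is_derive (fun u => RInt F t0 u) t (F t)).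
  { apply (is_derive_RInt (V:=R_CompleteNormedModule) F (fun u => RInt F t0 u) t0). exists (mkposreal 1 Rlt_0_1). intros.
    apply (RInt_correct (V:=R_CompleteNormedModule)). apply ex_RInt_cont. auto. auto. }
  assert (H2 : is_derive (fun u => c0 + RInt F t0 u) t (F t)).
  { apply is_derive_Reals. replace (F t) with (0 + F t) by ring.
    apply (derivable_pt_lim_plus (fun _ => c0) (fun u => RInt F t0 u)). apply derivable_pt_lim_const.
    apply is_derive_Reals. auto. }
  eapply is_derive_ext_loc; [| exact H2].
  assert (He : 0 < Rmin (t - lo) (hi - t)) by (apply Rmin_pos; lra).
  pose proof (Rmin_l (t - lo) (hi - t)). pose proof (Rmin_r (t - lo) (hi - t)).
  set (m := Rmin (t - lo) (hi - t)) in *.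
  exists (mkposreal _ He). intros y Hy. apply ball_R in Hy. change (Rabs (y - t) < m) in Hy.
  symmetry. apply HX. apply Rabs_lt_between in Hy. lra.
Qed.

Lemma wd_transfer (D D1 : R -> Prop) X f l s rho : 0 < rho -> wd D1 f l s ->
  (forall h, h <> 0 -> Rabs h < rho -> D (s + h) -> D1 (s + h) /\ X (s + h) = f (s + h)) ->
  X s = f s -> wd D X l s.
Proof.
  intros Hr H HX Hs e He. destruct (H e He) as [d [Hd Hy]].
  exists (Rmin d rho). split. apply Rmin_pos; auto. intros h Hh Hhd HD.
  destruct (HX h Hh) as [HD1 E]. eapply Rlt_le_trans; [exact Hhd| apply Rmin_r]. auto.
  rewrite E, Hs. apply Hy; auto. eapply Rlt_le_trans; [exact Hhd| apply Rmin_l].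
Qed.

Lemma wd_lr (D : R -> Prop) X l s : wd (fun y => y <= s /\ D y) X l s -> wd (fun y => s <= y /\ D y) X l s ->
  wd D X l s.
Proof.
  intros H1 H2 e He. destruct (H1 e He) as [d1 [Hd1 Hy1]]. destruct (H2 e He) as [d2 [Hd2 Hy2]].
  exists (Rmin d1 d2). split. apply Rmin_pos; auto. intros h Hh Hhd HD.
  destruct (Rle_dec h 0).
  - apply Hy1; auto. eapply Rlt_le_trans; [exact Hhd| apply Rmin_l]. split; auto; lra.
  - apply Hy2; auto. eapply Rlt_le_trans; [exact Hhd| apply Rmin_r]. split; auto; lra.
Qed.

Lemma wc_transfer (D D1 : R -> Prop) X f s rho : 0 < rho -> wc D1 f s ->
  (forall y, Rabs (y - s) < rho -> D y -> D1 y /\ X y = f y) -> X s = f s -> wc D X s.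
Proof.
  intros Hr H HX Hs e He. destruct (H e He) as [d [Hd Hy]].
  exists (Rmin d rho). split. apply Rmin_pos; auto. intros y Hyd HD.
  destruct (HX y). eapply Rlt_le_trans; [exact Hyd| apply Rmin_r]. auto.
  rewrite H1, Hs. apply Hy; auto. eapply Rlt_le_trans; [exact Hyd| apply Rmin_l].
Qed.

Lemma wc_lr (D : R -> Prop) X s : wc (fun y => y <= s /\ D y) X s -> wc (fun y => s <= y /\ D y) X s ->
  wc D X s.
Proof.
  intros H1 H2 e He. destruct (H1 e He) as [d1 [Hd1 Hy1]]. destruct (H2 e He) as [d2 [Hd2 Hy2]].
  exists (Rmin d1 d2). split. apply Rmin_pos; auto. intros y Hyd HD.
  destruct (Rle_dec y s).
  - apply Hy1; auto. eapply Rlt_le_trans; [exact Hyd| apply Rmin_l].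
  - apply Hy2; auto. eapply Rlt_le_trans; [exact Hyd| apply Rmin_r]. split; auto; lra.
Qed.

Lemma Rplus_minus_r3 (u w : R) : u + w - w = u. Proof. ring. Qed.

Section Delta.
Variables (a r v0 vU : R) (v : R -> R).
Hypotheses (ha : 0 < a) (hv0 : 0 < v0) (hvb : forall x, v0 <= v x <= vU)
  (hvc : forall x, continuous v x) (hr : a / v0 < r).

Lemma ar_pos : a < v0 * r.
Proof. apply (Rmult_lt_compat_l v0) in hr; auto. replace (v0 * (a / v0)) with a in hr by (field; lra). lra. Qed.
Lemma r_pos : 0 < r.
Proof. pose proof ar_pos. nra. Qed.

Lemma vZ_cont (Z : R -> R) s : continuous Z s -> continuous (fun u => v (Z u)) s.
Proof. intros H. apply (continuous_comp Z v). auto. apply hvc. Qed.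

Lemma ex_RInt_vZ (Z : R -> R) p q : (forall s, Rmin p q <= s <= Rmax p q -> continuous Z s) ->
  ex_RInt (fun u => v (Z u)) p q.
Proof. intros H. apply (ex_RInt_continuous (V:=R_CompleteNormedModule)). intros; apply vZ_cont; auto. Qed.

Lemma int_lower (Z : R -> R) p q : p <= q -> (forall s, p <= s <= q -> continuous Z s) ->
  v0 * (q - p) <= RInt (fun u => v (Z u)) p q.
Proof.
  intros Hpq H. 
  assert (E : RInt (fun _ => v0) p q = v0 * (q - p)).
  { rewrite RInt_const. unfold scal; simpl; unfold mult; simpl. ring. }
  rewrite <- E. apply RInt_le; auto. apply ex_RInt_const. apply ex_RInt_vZ.
  rewrite Rmin_left, Rmax_right; auto. intros; apply hvb.
Qed.

Lemma int_upper (Z : R -> R) p q : p <= q -> (forall s, p <= s <= q -> continuous Z s) ->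
  RInt (fun u => v (Z u)) p q <= vU * (q - p).
Proof.
  intros Hpq H. 
  assert (E : RInt (fun _ => vU) p q = vU * (q - p)).
  { rewrite RInt_const. unfold scal; simpl; unfold mult; simpl. ring. }
  rewrite <- E. apply RInt_le; auto. apply ex_RInt_vZ.
  rewrite Rmin_left, Rmax_right; auto. apply ex_RInt_const. intros; apply hvb.
Qed.

Lemma chasles_vZ (Z : R -> R) p q w lo hi : (forall s, lo <= s <= hi -> continuous Z s) ->
  lo <= p <= hi -> lo <= q <= hi -> lo <= w <= hi ->
  RInt (fun u => v (Z u)) p q + RInt (fun u => v (Z u)) q w = RInt (fun u => v (Z u)) p w.
Proof.
  intros H Hp Hq Hw.
  apply (RInt_Chasles (V:=R_CompleteNormedModule)); apply ex_RInt_vZ; intros s Hs; apply H;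
  unfold Rmin, Rmax in Hs; destruct (Rle_dec _ _) in Hs; lra.
Qed.

Lemma delta_exists (Z : R -> R) : (forall s, - r <= s <= 0 -> continuous Z s) ->
  exists u, 0 < u < r /\ RInt (fun s => v (Z s)) (- u) 0 = a.
Proof.
  intros HZ. pose proof r_pos. pose proof ar_pos.
  set (Phi := fun c => RInt (fun s => v (Z s)) (- clamp 0 r c) 0).
  assert (Hlip : forall c1 c2, Rabs (Phi c1 - Phi c2) <= vU * Rabs (c1 - c2)).
  { intros c1 c2. unfold Phi. pose proof (clamp_in 0 r c1). pose proof (clamp_in 0 r c2).
    rewrite <- (chasles_vZ Z (- clamp 0 r c1) (- clamp 0 r c2) 0 (-r) 0) by (auto; lra).
    rewrite Rplus_minus_r3.
    eapply Rle_trans. apply RInt_bound. apply ex_RInt_vZ. intros s Hs; apply HZ.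
    unfold Rmin, Rmax in Hs; destruct Rle_dec in Hs; lra.
    intros; rewrite Rabs_right; [apply hvb|]. pose proof (hvb (Z t)); lra.
    apply Rmult_le_compat_l. pose proof (hvb 0); lra.
    replace (- clamp 0 r c2 - - clamp 0 r c1) with (clamp 0 r c1 - clamp 0 r c2) by ring.
    apply clamp_lip. }
  assert (Hc : continuity Phi).
  { intros x. apply continuity_pt_filterlim. eapply lip_cont. exact Hlip. }
  assert (HP0 : Phi 0 = 0).
  { unfold Phi. rewrite clamp_id by lra. replace (-0) with 0 by ring. apply (RInt_point (V:=R_CompleteNormedModule)). }
  assert (Hr' : v0 * r <= Phi r).
  { unfold Phi. rewrite clamp_id by lra. replace (v0 * r) with (v0 * (0 - - r)) by ring.
    apply int_lower. lra. auto. }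
  destruct (IVT_gen Phi 0 r a Hc) as [c [Hc1 Hc2]].
  { rewrite HP0. rewrite Rmin_left, Rmax_right; lra. }
  rewrite Rmin_left, Rmax_right in Hc1 by lra.
  exists c. assert (c <> 0). { intros E; subst. lra. }
  assert (c <> r). { intros E; subst. lra. }
  split. lra. unfold Phi in Hc2. rewrite clamp_id in Hc2 by lra. auto.
Qed.

Lemma delta_unique (Z : R -> R) u1 u2 : (forall s, - r <= s <= 0 -> continuous Z s) ->
  0 < u1 < r -> RInt (fun s => v (Z s)) (- u1) 0 = a ->
  0 < u2 < r -> RInt (fun s => v (Z s)) (- u2) 0 = a -> u1 = u2.
Proof.
  intros HZ H1 E1 H2 E2.
  assert (forall p q, 0 < p < r -> 0 < q < r -> p < q -> RInt (fun s => v (Z s)) (- p) 0 = a ->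
     RInt (fun s => v (Z s)) (- q) 0 = a -> False).
  { intros p q Hp Hq Hpq Ep Eq.
    rewrite <- (chasles_vZ Z (-q) (-p) 0 (-r) 0) in Eq by (auto; lra).
    assert (v0 * (- p - - q) <= RInt (fun s => v (Z s)) (- q) (- p)).
    { apply int_lower. lra. intros; apply HZ; lra. }
    assert (0 < v0 * (- p - - q)) by (apply Rmult_lt_0_compat; lra). lra. }
  destruct (Rtotal_order u1 u2) as [L|[L|L]]; auto; exfalso; eauto.
Qed.

Lemma delta_val (Z : R -> R) u : (forall s, - r <= s <= 0 -> continuous Z s) ->
  0 < u < r -> RInt (fun s => v (Z s)) (- u) 0 = a -> delta a r v Z = u.
Proof.
  intros HZ Hu E. unfold delta.
  pose proof (epsilon_spec (inhabits 0) (fun u => 0 < u < r /\ RInt (fun s => v (Z s)) (- u) 0 = a)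
    (ex_intro _ u (conj Hu E))) as [H1 H2].
  eapply delta_unique; eauto.
Qed.

Lemma delta_spec (Z : R -> R) : (forall s, - r <= s <= 0 -> continuous Z s) ->
  0 < delta a r v Z < r /\ RInt (fun s => v (Z s)) (- delta a r v Z) 0 = a /\ delta a r v Z <= a / v0.
Proof.
  intros HZ. destruct (delta_exists Z HZ) as [u [Hu E]].
  rewrite (delta_val Z u HZ Hu E). split; auto. split; auto.
  assert (v0 * (0 - - u) <= a). { rewrite <- E. apply int_lower. lra. intros; apply HZ; lra. }
  apply (Rmult_le_reg_l v0); auto. replace (v0 * (a / v0)) with a by (field; lra). lra.
Qed.

Lemma delta_ext (Z1 Z2 : R -> R) : (forall s, - r <= s <= 0 -> Z1 s = Z2 s) ->
  delta a r v Z1 = delta a r v Z2.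
Proof.
  intros HZ. unfold delta. f_equal. apply functional_extensionality. intros u.
  apply propositional_extensionality. split; intros [Hu E]; split; auto; rewrite <- E;
  apply RInt_ext; rewrite Rmin_left, Rmax_right by lra; intros x Hx; rewrite HZ; auto; lra.
Qed.

Lemma G_ext beta mu gamma g (Z1 Z2 : R -> R) : (forall s, - r <= s <= 0 -> continuous Z1 s) ->
  (forall s, - r <= s <= 0 -> Z1 s = Z2 s) ->
  G beta mu gamma a r g v Z1 = G beta mu gamma a r g v Z2.
Proof.
  intros Hc HZ. unfold G. rewrite <- (delta_ext Z1 Z2 HZ).
  destruct (delta_spec Z1 Hc) as [Hd _]. pose proof r_pos.
  rewrite <- !HZ by lra. reflexivity.
Qed.


Lemma W_chasles (H : R -> R) T s1 s2 : (forall x, continuous H x) ->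
  RInt (fun u => v (H u)) s1 T = RInt (fun u => v (H u)) s1 s2 + RInt (fun u => v (H u)) s2 T.
Proof.
  intros Hc. symmetry. apply (RInt_Chasles (V:=R_CompleteNormedModule)); apply ex_RInt_vZ; auto.
Qed.

Lemma W_gap (H : R -> R) T s1 s2 : (forall x, continuous H x) ->
  v0 * Rabs (s1 - s2) <= Rabs (RInt (fun u => v (H u)) s1 T - RInt (fun u => v (H u)) s2 T).
Proof.
  intros Hc. rewrite (W_chasles H T s1 s2 Hc). rewrite Rplus_minus_r3.
  destruct (Rle_dec s1 s2) as [Hle|n].
  - pose proof (int_lower H s1 s2 Hle (fun s _ => Hc s)). rewrite Rabs_left1 by lra.
    rewrite Rabs_right. lra. pose proof (Rmult_le_pos v0 (s2 - s1)); lra.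
  - apply Rnot_le_lt in n. pose proof (int_lower H s2 s1 (Rlt_le _ _ n) (fun s _ => Hc s)).
    rewrite <- (opp_RInt_swap (V:=R_CompleteNormedModule)). unfold opp; simpl.
    rewrite Rabs_right by lra. rewrite Rabs_Ropp. rewrite Rabs_right. lra.
    pose proof (Rmult_le_pos v0 (s1 - s2)); lra. apply ex_RInt_vZ; auto.
Qed.

Lemma W_lip (H : R -> R) T s1 s2 : (forall x, continuous H x) ->
  Rabs (RInt (fun u => v (H u)) s1 T - RInt (fun u => v (H u)) s2 T) <= vU * Rabs (s1 - s2).
Proof.
  intros Hc. rewrite (W_chasles H T s1 s2 Hc). rewrite Rplus_minus_r3.
  rewrite Rabs_minus_sym. apply RInt_bound. apply ex_RInt_vZ; auto.
  intros. rewrite Rabs_right. apply hvb. pose proof (hvb (H t)); lra.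
Qed.

Lemma tau_exists (H : R -> R) T : (forall x, continuous H x) -> 0 <= T ->
  exists tau : R -> R, (forall V, - r <= tau V <= T) /\
    (forall V1 V2, Rabs (tau V1 - tau V2) <= Rabs (V1 - V2) / v0) /\
    (forall V, 0 <= V <= a -> RInt (fun u => v (H u)) (tau V) T = a - V).
Proof.
  intros Hc HT. pose proof r_pos. pose proof ar_pos.
  set (W := fun s => RInt (fun u => v (H u)) s T).
  assert (Wc : continuity W).
  { intros x. apply continuity_pt_filterlim. apply (lip_cont W vU). intros; apply W_lip; auto. }
  assert (WT : W T = 0) by apply (RInt_point (V:=R_CompleteNormedModule)).
  assert (Wr : v0 * (T - - r) <= W (- r)) by (apply int_lower; auto; lra).
  assert (Hy : forall y, Rmin (W (- r)) (W T) <= clamp 0 a y <= Rmax (W (- r)) (W T)).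
  { intros y. pose proof (clamp_in 0 a y). rewrite WT. rewrite Rmin_right, Rmax_left by nra. nra. }
  exists (fun V => proj1_sig (IVT_gen W (- r) T (clamp 0 a (a - V)) Wc (Hy (a - V)))).
  split; [|split].
  - intros V. destruct (IVT_gen W (- r) T (clamp 0 a (a - V)) Wc (Hy (a - V))) as [s [Hs1 Hs2]].
    simpl. rewrite Rmin_left, Rmax_right in Hs1; lra.
  - intros V1 V2.
    destruct (IVT_gen W (- r) T (clamp 0 a (a - V1)) Wc (Hy (a - V1))) as [s1 [R1 E1]].
    destruct (IVT_gen W (- r) T (clamp 0 a (a - V2)) Wc (Hy (a - V2))) as [s2 [R2 E2]]. simpl.
    pose proof (W_gap H T s1 s2 Hc). fold (W s1) (W s2) in H2. rewrite E1, E2 in H2.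
    pose proof (clamp_lip 0 a (a - V1) (a - V2)).
    replace (a - V1 - (a - V2)) with (- (V1 - V2)) in H3 by ring. rewrite Rabs_Ropp in H3.
    apply (Rmult_le_reg_l v0); auto. replace (v0 * (Rabs (V1 - V2) / v0)) with (Rabs (V1 - V2)) by (field; lra).
    lra.
  - intros V HV. destruct (IVT_gen W (- r) T (clamp 0 a (a - V)) Wc (Hy (a - V))) as [s [R0 E]].
    simpl. fold (W s). rewrite E. apply clamp_id. lra.
Qed.

End Delta.

Lemma C1_lip (f : R -> R) A : C1_R f -> 0 <= A ->
  exists Lf, 0 <= Lf /\ forall x y, - A <= x <= A -> - A <= y <= A -> Rabs (f x - f y) <= Lf * Rabs (x - y).
Proof.
  intros [f' Hf] HA.
  destruct (continuity_ab_maj (fun x => Rabs (f' x)) (- A) A) as [m [Hm1 Hm2]]. lra.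
  { intros c Hc. apply continuity_pt_filterlim.
    apply (continuous_comp f' Rabs). apply Hf. apply continuous_Rabs. }
  exists (Rabs (f' m)). split. apply Rabs_pos. intros x y Hx Hy.
  destruct (MVT_gen f y x f') as [c [Hc1 Hc2]].
  - intros; apply Hf.
  - intros; apply continuity_pt_filterlim. apply (ex_derive_continuous (K:=R_AbsRing) (V:=R_NormedModule)). eexists. apply Hf.
  - rewrite Hc2. rewrite Rabs_mult. apply Rmult_le_compat_r. apply Rabs_pos. apply Hm1.
    revert Hc1. unfold Rmin, Rmax; destruct Rle_dec; lra.
Qed.

Lemma exp_lip a1 a2 : 0 <= a1 -> 0 <= a2 -> Rabs (exp (- a1) - exp (- a2)) <= Rabs (a1 - a2).
Proof.
  assert (Hg : forall p q, 0 <= p <= q -> exp (- p) - exp (- q) <= q - p).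
  { intros p q Hpq. pose proof (exp_ineq1_le (p - q)).
    assert (exp (- q) = exp (- p) * exp (p - q)) by (rewrite <- exp_plus; f_equal; ring).
    assert (exp (- p) <= 1). { rewrite <- exp_0. destruct (Req_dec p 0). subst. rewrite Ropp_0. lra.
      left. apply exp_increasing. lra. }
    pose proof (exp_pos (- p)). nra. }
  intros H1 H2. destruct (Rle_dec a1 a2).
  - pose proof (Hg a1 a2 (conj H1 r)). assert (exp (- a2) <= exp (- a1)).
    { destruct (Req_dec a1 a2). subst; lra. left; apply exp_increasing; lra. }
    rewrite Rabs_right by lra. rewrite Rabs_left1 by lra. lra.
  - pose proof (Hg a2 a1 (conj H2 (Rlt_le _ _ (Rnot_le_lt _ _ n)))). assert (exp (- a1) <= exp (- a2)).
    { left; apply exp_increasing; lra. }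
    rewrite Rabs_left1 by lra. rewrite Rabs_right by lra. lra.
Qed.

Lemma exp_le1 a : 0 <= a -> exp (- a) <= 1.
Proof. intros. rewrite <- exp_0. destruct (Req_dec a 0). subst. rewrite Ropp_0. lra.
  left. apply exp_increasing. lra. Qed.

Lemma clamp_cont_wc (f : R -> R) lo hi x : lo <= hi ->
  (forall s, lo <= s <= hi -> wc (fun y => lo <= y <= hi) f s) ->
  continuous (fun y => f (clamp lo hi y)) x.
Proof.
  intros Hlh H. apply cont_eps. intros e He.
  destruct (H (clamp lo hi x) (clamp_in lo hi x Hlh) e He) as [d [Hd Hy]].
  exists d. split; [exact Hd|]. intros y Hyx. apply Hy. eapply Rle_lt_trans; [apply clamp_lip| exact Hyx].
  apply clamp_in; auto.
Qed.

Lemma RInt_shift (f : R -> R) t p q : (forall x, continuous f x) ->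
  RInt (fun s => f (t + s)) p q = RInt f (t + p) (t + q).
Proof.
  intros Hf.
  assert (E := RInt_comp_lin (V:=R_CompleteNormedModule) f 1 t p q).
  replace (1 * p + t) with (t + p) in E by ring. replace (1 * q + t) with (t + q) in E by ring.
  rewrite <- E. apply RInt_ext. intros. unfold scal; simpl; unfold mult; simpl. rewrite Rmult_1_l.
  f_equal. ring. apply ex_RInt_cont; auto.
Qed.

Definition lipf (F : R -> R -> R) (C : R) :=
  forall x y x' y', Rabs (F x y - F x' y') <= C * (Rabs (x - x') + Rabs (y - y')).
Definition bnd (F : R -> R -> R) (Bd : R) := forall x y, Rabs (F x y) <= Bd.

Lemma lip_mul F G C1 C2 B1 B2 : lipf F C1 -> lipf G C2 -> bnd F B1 -> bnd G B2 ->
  lipf (fun x y => F x y * G x y) (C1 * B2 + B1 * C2).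
Proof.
  intros H1 H2 H3 H4 x y x' y'.
  replace (F x y * G x y - F x' y' * G x' y') with ((F x y - F x' y') * G x y + F x' y' * (G x y - G x' y')) by ring.
  eapply Rle_trans. apply Rabs_triang. rewrite !Rabs_mult.
  specialize (H1 x y x' y'). specialize (H2 x y x' y'). specialize (H3 x' y'). specialize (H4 x y).
  pose proof (Rabs_pos (F x y - F x' y')). pose proof (Rabs_pos (G x y - G x' y')).
  pose proof (Rabs_pos (F x' y')). pose proof (Rabs_pos (G x y)).
  pose proof (Rabs_pos (x - x')). pose proof (Rabs_pos (y - y')).
  apply Rle_trans with (C1 * (Rabs (x - x') + Rabs (y - y')) * B2 + B1 * (C2 * (Rabs (x - x') + Rabs (y - y')))).
  apply Rplus_le_compat. apply Rmult_le_compat; auto. apply Rmult_le_compat; auto.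
  right; ring.
Qed.

Lemma bnd_mul F G B1 B2 : bnd F B1 -> bnd G B2 -> bnd (fun x y => F x y * G x y) (B1 * B2).
Proof.
  intros H1 H2 x y. rewrite Rabs_mult. apply Rmult_le_compat; auto; apply Rabs_pos.
Qed.

Lemma lip_lin F G C1 C2 c1 c2 : lipf F C1 -> lipf G C2 ->
  lipf (fun x y => c1 * F x y - c2 * G x y) (Rabs c1 * C1 + Rabs c2 * C2).
Proof.
  intros H1 H2 x y x' y'.
  replace (c1 * F x y - c2 * G x y - (c1 * F x' y' - c2 * G x' y')) with
    (c1 * (F x y - F x' y') - c2 * (G x y - G x' y')) by ring.
  eapply Rle_trans. apply Rabs_triang. rewrite Rabs_Ropp, !Rabs_mult.
  specialize (H1 x y x' y'). specialize (H2 x y x' y').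
  pose proof (Rabs_pos c1). pose proof (Rabs_pos c2).
  apply Rle_trans with (Rabs c1 * (C1 * (Rabs (x - x') + Rabs (y - y'))) + Rabs c2 * (C2 * (Rabs (x - x') + Rabs (y - y')))).
  apply Rplus_le_compat; apply Rmult_le_compat_l; auto. right; ring.
Qed.

Lemma lip_x (h : R -> R) C : 0 <= C -> (forall x x', Rabs (h x - h x') <= C * Rabs (x - x')) ->
  lipf (fun x y => h x) C.
Proof. intros HC H x y x' y'. eapply Rle_trans. apply H. apply Rmult_le_compat_l; auto.
  pose proof (Rabs_pos (y - y')). lra. Qed.

Lemma lip_y (h : R -> R) C : 0 <= C -> (forall y y', Rabs (h y - h y') <= C * Rabs (y - y')) ->
  lipf (fun x y => h y) C.
Proof. intros HC H x y x' y'. eapply Rle_trans. apply H. apply Rmult_le_compat_l; auto.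
  pose proof (Rabs_pos (x - x')). lra. Qed.

Lemma clamp_same c s : clamp c c s = c.
Proof. pose proof (clamp_in c c s (Rle_refl c)). lra. Qed.

Lemma lipf_mono F C C' : lipf F C -> C <= C' -> lipf F C'.
Proof. intros H HC x y x' y'. eapply Rle_trans. apply H. apply Rmult_le_compat_r; auto.
  pose proof (Rabs_pos (x - x')). pose proof (Rabs_pos (y - y')). lra. Qed.

Ltac rring := match goal with |- @eq _ ?A ?B => change (@eq R A B) end; ring.

Section Main.
Variables (beta mu gamma a r g0 gU v0 vU M K Lv Lg : R) (g v phi dphi : R -> R).
Hypotheses (hbeta : 0 < beta) (hmu : 0 < mu) (hgamma : 0 < gamma) (ha : 0 < a)
  (hv0 : 0 < v0) (hvb : forall x, v0 <= v x <= vU) (hr : a / v0 < r)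
  (hg0 : 0 < g0) (hgb : forall x, g0 <= g x <= gU)
  (hgc : forall x, continuous g x) (hvc : forall x, continuous v x)
  (hM0 : 0 <= M) (hMdU : beta * gU * (vU / v0) / gamma <= M)
  (hLv0 : 0 <= Lv) (hLv : forall x y, - (M + 1) <= x <= M + 1 -> - (M + 1) <= y <= M + 1 -> Rabs (v x - v y) <= Lv * Rabs (x - y))
  (hLg0 : 0 <= Lg) (hLg : forall x y, - (M + 1) <= x <= M + 1 -> - (M + 1) <= y <= M + 1 -> Rabs (g x - g y) <= Lg * Rabs (x - y))
  (hKB : beta * (vU / v0) * gU + gamma * (M + 1) + vU <= K)
  (hphiM : forall s, Rabs (phi (clamp (- r) 0 s)) <= M)
  (hphiK : forall s1 s2, Rabs (phi (clamp (- r) 0 s1) - phi (clamp (- r) 0 s2)) <= K * Rabs (s1 - s2)).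

Definition M1 := M + 1.
Definition Bf := beta * (vU / v0) * gU + gamma * M1 + vU.
Definition Lprod := ((mu / v0) * vU + 1 * Lv) * (gU * / v0) +
   (1 * vU) * ((Lg * (K / v0)) * / v0 + gU * (Lv * (K / v0) / (v0 * v0))).
Definition L := beta * Lprod + gamma * 1 + Lv + 1.
Definition hstep := a / vU.
Definition k := Rmin hstep (Rmin (1 / Bf) (1 / (4 * L))).
Definition GG := G beta mu gamma a r g v.

Lemma vU_pos : 0 < vU. Proof. pose proof (hvb 0). lra. Qed.
Lemma gU_pos : 0 < gU. Proof. pose proof (hgb 0). lra. Qed.
Lemma v0_le_vU : v0 <= vU. Proof. pose proof (hvb 0). lra. Qed.
Lemma Bf_pos : 0 < Bf.
Proof. unfold Bf, M1. pose proof vU_pos. pose proof gU_pos.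
  assert (0 < beta * (vU / v0) * gU) by (apply Rmult_lt_0_compat; [apply Rmult_lt_0_compat|]; auto; apply Rdiv_lt_0_compat; auto).
  assert (0 <= gamma * (M + 1)) by (apply Rmult_le_pos; lra). lra. Qed.
Lemma K_pos : 0 < K. Proof. pose proof Bf_pos. unfold Bf, M1 in *. lra. Qed.
Lemma Lprod_pos : 0 <= Lprod.
Proof.
  unfold Lprod. pose proof vU_pos. pose proof gU_pos. pose proof K_pos.
  assert (0 < / v0) by (apply Rinv_0_lt_compat; auto).
  assert (0 <= mu / v0) by (apply Rlt_le, Rdiv_lt_0_compat; auto).
  assert (0 <= K / v0) by (apply Rlt_le, Rdiv_lt_0_compat; auto).
  assert (0 < v0 * v0) by nra.
  assert (0 <= Lv * (K / v0) / (v0 * v0)) by (apply Rmult_le_pos; [nra| left; apply Rinv_0_lt_compat; auto]).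
  assert (0 <= Lg * (K / v0) * / v0) by (apply Rmult_le_pos; nra).
  apply Rplus_le_le_0_compat; apply Rmult_le_pos; nra.
Qed.
Lemma L_pos : 1 <= L.
Proof. unfold L. pose proof Lprod_pos. assert (0 <= beta * Lprod) by (apply Rmult_le_pos; lra). lra. Qed.
Lemma k_pos : 0 < k.
Proof.
  unfold k, hstep. pose proof vU_pos. pose proof Bf_pos. pose proof L_pos.
  repeat apply Rmin_pos; apply Rdiv_lt_0_compat; lra.
Qed.
Lemma k_h : k <= a / vU. Proof. unfold k, hstep. apply Rmin_l. Qed.
Lemma k_B : k * Bf <= 1.
Proof. pose proof Bf_pos. assert (k <= 1 / Bf) by (unfold k; eapply Rle_trans; [apply Rmin_r| apply Rmin_l]).
  apply (Rmult_le_compat_r Bf) in H0; [|lra]. replace (1 / Bf * Bf) with 1 in H0 by (field; lra). lra. Qed.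
Lemma k_L : 4 * k * L <= 1.
Proof. pose proof L_pos. assert (k <= 1 / (4 * L)) by (unfold k; eapply Rle_trans; [apply Rmin_r| apply Rmin_r]).
  apply (Rmult_le_compat_r (4 * L)) in H0; [|lra]. replace (1 / (4 * L) * (4 * L)) with 1 in H0 by (field; lra). lra. Qed.

Definition Good (T : R) (Y : R -> R) : Prop :=
  0 <= T /\ (forall s, - r <= s <= 0 -> Y s = phi s) /\ (forall s, Rabs (Y s) <= M) /\
  (forall s1 s2, Rabs (Y s1 - Y s2) <= K * Rabs (s1 - s2)) /\
  (forall t, 0 <= t <= T -> Y t = phi 0 + RInt (fun s => GG (seg Y (clamp 0 T s))) 0 t) /\
  (forall x, continuous (fun s => GG (seg Y (clamp 0 T s))) x).

Lemma good_base : Good 0 (fun s => phi (clamp (- r) 0 s)).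
Proof.
  pose proof (r_pos a r v0 ha hv0 hr) as Hr.
  split; [lra|]. split; [intros; rewrite clamp_id; auto|]. split; [auto|]. split; [auto|]. split.
  - intros t Ht. assert (t = 0) by lra. subst. rewrite (RInt_point (V:=R_CompleteNormedModule)).
    rewrite clamp_id by lra. simpl. unfold zero; simpl. ring.
  - intros x. eapply continuous_ext; [| apply continuous_const]. intros y. simpl.
    rewrite clamp_same. reflexivity.
Qed.

Section Step.
Variables (T : R) (Y tau : R -> R).
Hypotheses (hGood : Good T Y) (htau1 : forall V, - r <= tau V <= T)
  (htau2 : forall V1 V2, Rabs (tau V1 - tau V2) <= Rabs (V1 - V2) / v0)
  (htau3 : forall V, 0 <= V <= a -> RInt (fun u => v (Y u)) (tau V) T = a - V).

Lemma T_nn : 0 <= T. Proof. apply hGood. Qed.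
Lemma Y_bnd s : Rabs (Y s) <= M. Proof. apply hGood. Qed.
Lemma Y_lip s1 s2 : Rabs (Y s1 - Y s2) <= K * Rabs (s1 - s2). Proof. apply hGood. Qed.
Lemma Y_cont s : continuous Y s. Proof. apply (lip_cont Y K Y_lip). Qed.
Lemma Y_in s : - M1 <= Y s <= M1.
Proof. pose proof (Y_bnd s). unfold M1. apply Rabs_le_between in H. lra. Qed.

Definition cx x := clamp (- M1) M1 x.
Definition ct t := clamp T (T + k) t.
Definition f1 t x V := beta * exp (- mu * (ct t - tau V)) * (v (cx x) / v (Y (tau V))) * g (Y (tau V)) - gamma * cx x.
Definition f2 (t x V : R) := v (cx x).

Lemma M1_pos : 0 <= M1. Proof. unfold M1; lra. Qed.
Lemma cx_in x : - M1 <= cx x <= M1. Proof. apply clamp_in. pose proof M1_pos; lra. Qed.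
Lemma ct_ge t : T <= ct t. Proof. pose proof k_pos. apply clamp_in. lra. Qed.

Lemma prodA_bounds E p d gg : 0 <= E <= 1 -> v0 <= p <= vU -> v0 <= d <= vU -> 0 < gg <= gU ->
  0 <= beta * E * (p / d) * gg <= beta * (vU / v0) * gU.
Proof.
  intros HE Hp Hd Hg.
  assert (0 <= p / d <= vU / v0).
  { assert (Hd' : 0 < / d) by (apply Rinv_0_lt_compat; lra).
    assert (/ d <= / v0) by (apply Rinv_le_contravar; lra).
    unfold Rdiv; split; nra. }
  assert (0 <= beta * E) by nra.
  assert (0 <= beta * E * (p / d)) by nra.
  assert (beta * E <= beta) by nra.
  assert (beta * E * (p / d) <= beta * (vU / v0)) by nra.
  split; nra.
Qed.

Lemma E_bound t V : 0 <= exp (- mu * (ct t - tau V)) <= 1.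
Proof. pose proof (ct_ge t). pose proof (htau1 V). split. left; apply exp_pos.
  replace (- mu * (ct t - tau V)) with (- (mu * (ct t - tau V))) by ring. apply exp_le1. nra. Qed.

Lemma gpos x : 0 < g x <= gU. Proof. pose proof (hgb x). lra. Qed.

Lemma f1_bound t x V : Rabs (f1 t x V) <= Bf.
Proof.
  unfold f1, Bf. pose proof (prodA_bounds _ _ _ _ (E_bound t V) (hvb (cx x)) (hvb (Y (tau V))) (gpos (Y (tau V)))).
  pose proof (cx_in x). pose proof vU_pos.
  assert (Rabs (gamma * cx x) <= gamma * M1). { rewrite Rabs_mult, Rabs_right by lra.
    apply Rmult_le_compat_l; [lra|]. apply Rabs_le; lra. }
  eapply Rle_trans. apply Rabs_triang. rewrite Rabs_Ropp. rewrite Rabs_right by lra. lra.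
Qed.

Lemma f2_bound t x V : Rabs (f2 t x V) <= Bf.
Proof. unfold f2, Bf. rewrite Rabs_right by (pose proof (hvb (cx x)); lra). pose proof (hvb (cx x)).
  pose proof (prodA_bounds 1 vU vU gU ltac:(lra) ltac:(pose proof v0_le_vU; lra) ltac:(pose proof v0_le_vU; lra) ltac:(pose proof gU_pos; lra)).
  assert (0 <= gamma * M1) by (apply Rmult_le_pos; [lra| apply M1_pos]). lra. Qed.

Lemma lipf_ext F F' C : lipf F C -> (forall x y, F' x y = F x y) -> lipf F' C.
Proof. intros H E x y x' y'. rewrite !E. apply H. Qed.

Lemma tauY_lip V1 V2 : Rabs (Y (tau V1) - Y (tau V2)) <= (K / v0) * Rabs (V1 - V2).
Proof. eapply Rle_trans. apply Y_lip. pose proof K_pos. pose proof (htau2 V1 V2).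
  replace (K / v0 * Rabs (V1 - V2)) with (K * (Rabs (V1 - V2) / v0)) by (field; lra).
  apply Rmult_le_compat_l; lra. Qed.

Lemma f1_lip t : lipf (f1 t) L.
Proof.
  pose proof vU_pos. pose proof gU_pos. pose proof K_pos.
  assert (Hv0i : 0 < / v0) by (apply Rinv_0_lt_compat; auto).
  assert (LE : lipf (fun x V => exp (- mu * (ct t - tau V))) (mu / v0)).
  { apply lip_y. apply Rlt_le, Rdiv_lt_0_compat; auto. intros V1 V2.
    pose proof (ct_ge t). pose proof (htau1 V1). pose proof (htau1 V2).
    replace (- mu * (ct t - tau V1)) with (- (mu * (ct t - tau V1))) by ring.
    replace (- mu * (ct t - tau V2)) with (- (mu * (ct t - tau V2))) by ring.
    eapply Rle_trans. apply exp_lip; nra.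
    replace (mu * (ct t - tau V1) - mu * (ct t - tau V2)) with (mu * (tau V2 - tau V1)) by ring.
    rewrite Rabs_mult, Rabs_right by lra. rewrite Rabs_minus_sym.
    replace (mu / v0 * Rabs (V1 - V2)) with (mu * (Rabs (V1 - V2) / v0)) by (field; lra).
    apply Rmult_le_compat_l; [lra|]. apply htau2. }
  assert (BE : bnd (fun x V => exp (- mu * (ct t - tau V))) 1).
  { intros x V. pose proof (E_bound t V). rewrite Rabs_right; lra. }
  assert (LP : lipf (fun x V => v (cx x)) Lv).
  { apply lip_x; auto. intros. eapply Rle_trans. apply hLv; apply cx_in.
    apply Rmult_le_compat_l; auto. apply clamp_lip. }
  assert (BP : bnd (fun x V => v (cx x)) vU).
  { intros x V. pose proof (hvb (cx x)). rewrite Rabs_right; lra. }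
  assert (LN : lipf (fun x V => g (Y (tau V))) (Lg * (K / v0))).
  { apply lip_y. apply Rmult_le_pos; auto. apply Rlt_le, Rdiv_lt_0_compat; auto.
    intros V1 V2. eapply Rle_trans. apply hLg; apply Y_in. rewrite Rmult_assoc.
    apply Rmult_le_compat_l; auto. apply tauY_lip. }
  assert (BN : bnd (fun x V => g (Y (tau V))) gU).
  { intros x V. pose proof (gpos (Y (tau V))). rewrite Rabs_right; lra. }
  assert (LD : lipf (fun x V => / v (Y (tau V))) (Lv * (K / v0) / (v0 * v0))).
  { apply lip_y. apply Rmult_le_pos. apply Rmult_le_pos; auto. apply Rlt_le, Rdiv_lt_0_compat; auto.
    left; apply Rinv_0_lt_compat; nra.
    intros V1 V2. pose proof (hvb (Y (tau V1))). pose proof (hvb (Y (tau V2))).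
    replace (/ v (Y (tau V1)) - / v (Y (tau V2))) with ((v (Y (tau V2)) - v (Y (tau V1))) / (v (Y (tau V1)) * v (Y (tau V2)))) by (field; lra).
    unfold Rdiv. rewrite Rabs_mult. rewrite (Rabs_right (/ _)) by (left; apply Rinv_0_lt_compat; nra).
    apply Rle_trans with (Rabs (v (Y (tau V2)) - v (Y (tau V1))) * / (v0 * v0)).
    apply Rmult_le_compat_l. apply Rabs_pos. apply Rinv_le_contravar. nra. apply Rmult_le_compat; lra.
    rewrite Rabs_minus_sym. 
    apply Rle_trans with (Lv * (K / v0 * Rabs (V1 - V2)) * / (v0 * v0)).
    apply Rmult_le_compat_r. left; apply Rinv_0_lt_compat; nra.
    eapply Rle_trans. apply hLv; apply Y_in. apply Rmult_le_compat_l; auto. apply tauY_lip.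
    right; field; lra. }
  assert (BD : bnd (fun x V => / v (Y (tau V))) (/ v0)).
  { intros x V. pose proof (hvb (Y (tau V))). rewrite Rabs_right. apply Rinv_le_contravar; lra.
    left; apply Rinv_0_lt_compat; lra. }
  pose proof (lip_mul _ _ _ _ _ _ LE LP BE BP) as LEP.
  pose proof (bnd_mul _ _ _ _ BE BP) as BEP.
  pose proof (lip_mul _ _ _ _ _ _ LN LD BN BD) as LND.
  pose proof (bnd_mul _ _ _ _ BN BD) as BND.
  pose proof (lip_mul _ _ _ _ _ _ LEP LND BEP BND) as LALL.
  assert (LC : lipf (fun x V => cx x) 1).
  { apply lip_x. lra. intros; rewrite Rmult_1_l; apply clamp_lip. }
  pose proof (lip_lin _ _ _ _ beta gamma LALL LC) as LF.
  eapply lipf_mono. eapply lipf_ext. exact LF.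
  intros x V. unfold f1. pose proof (hvb (Y (tau V))). field. lra.
  rewrite Rabs_right, (Rabs_right gamma) by lra. unfold L, Lprod. pose proof hLv0. lra.
Qed.

Lemma f2_lip t : lipf (f2 t) L.
Proof.
  eapply lipf_mono. apply lip_x; [exact hLv0|]. intros. eapply Rle_trans. apply hLv; apply cx_in.
  apply Rmult_le_compat_l; auto. apply clamp_lip.
  unfold L. pose proof Lprod_pos. assert (0 <= beta * Lprod) by (apply Rmult_le_pos; lra). lra.
Qed.

Lemma f1_cont x V t : continuous (fun s => f1 s x V) t.
Proof.
  unfold f1. apply (continuous_comp ct (fun u => beta * exp (- mu * (u - tau V)) * (v (cx x) / v (Y (tau V))) * g (Y (tau V)) - gamma * cx x)).
  apply clamp_cont.
  apply (ex_derive_continuous (K:=R_AbsRing) (V:=R_NormedModule)). auto_derive. auto.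
Qed.

Lemma f2_cont x V t : continuous (fun s => f2 s x V) t.
Proof. unfold f2. apply continuous_const. Qed.


Section Sol.
Variables (x V : R -> R).
Hypotheses (hxl : forall s1 s2, Rabs (x s1 - x s2) <= Bf * Rabs (s1 - s2))
  (hVl : forall s1 s2, Rabs (V s1 - V s2) <= Bf * Rabs (s1 - s2))
  (hint : forall t, T <= t <= T + k ->
     x t = Y T + RInt (fun s => f1 s (x s) (V s)) T t /\ V t = 0 + RInt (fun s => f2 s (x s) (V s)) T t).

Definition Q s := f1 s (x s) (V s).
Lemma x_cont s : continuous x s. Proof. apply (lip_cont x Bf hxl). Qed.
Lemma V_cont s : continuous V s. Proof. apply (lip_cont V Bf hVl). Qed.
Lemma L_nn : 0 <= L. Proof. pose proof L_pos. lra. Qed.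
Lemma Q_cont s : continuous Q s.
Proof. apply (comp_cont f1 L); auto. apply L_nn. intro t; apply f1_lip. apply f1_cont. apply x_cont. apply V_cont. Qed.
Lemma Q2_cont s : continuous (fun s => f2 s (x s) (V s)) s.
Proof. apply (comp_cont f2 L); auto. apply L_nn. intro t; apply f2_lip. apply f2_cont. apply x_cont. apply V_cont. Qed.

Lemma xT : x T = Y T.
Proof. pose proof k_pos. destruct (hint T) as [H1 _]. lra. rewrite H1.
  rewrite (RInt_point (V:=R_CompleteNormedModule)). unfold zero; simpl. ring. Qed.

Lemma x_near t : T <= t <= T + k -> cx (x t) = x t.
Proof.
  intros Ht. apply clamp_id. pose proof (hxl t T). rewrite xT in H. pose proof (Y_bnd T).
  pose proof k_B. pose proof Bf_pos.
  assert (Bf * Rabs (t - T) <= 1). { rewrite Rabs_right by lra. nra. }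
  apply Rabs_le_between in H0. apply Rabs_le_between' in H. unfold M1. lra.
Qed.

Lemma V_eq t : T <= t <= T + k -> V t = RInt (fun u => v (x u)) T t.
Proof.
  intros Ht. destruct (hint t Ht) as [_ H]. rewrite H. rewrite Rplus_0_l. apply RInt_ext.
  intros u Hu. rewrite Rmin_left, Rmax_right in Hu by lra. unfold f2. rewrite x_near; auto. lra.
Qed.

Lemma V_range t : T <= t <= T + k -> 0 <= V t <= a.
Proof.
  intros Ht. rewrite V_eq by auto. split.
  - eapply Rle_trans; [| apply (int_lower v0 vU v hvb hvc x T t)]. nra. lra. intros; apply x_cont.
  - eapply Rle_trans. apply (int_upper v0 vU v hvb hvc x T t). lra. intros; apply x_cont.
    pose proof k_h. pose proof vU_pos.
    apply Rle_trans with (vU * (a / vU)). apply Rmult_le_compat_l; lra. right; field; lra.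
Qed.

Lemma x_deriv t : T < t < T + k -> is_derive x t (Q t).
Proof.
  intros Ht. apply (int_deriv x Q (Y T) T T (T + k)); auto. intros u Hu. apply hint; auto.
  apply Q_cont.
Qed.

Lemma Q_split s : T <= s <= T + k ->
  Q s = beta * exp (- mu * (s - tau (V s))) * (v (x s) / v (Y (tau (V s)))) * g (Y (tau (V s))) - gamma * x s.
Proof. intros Hs. unfold Q, f1. rewrite x_near by auto. unfold ct. rewrite clamp_id by auto. reflexivity. Qed.

Lemma x_bound t : T <= t <= T + k -> Rabs (x t) <= M.
Proof.
  intros Ht. set (Fv := fun s => Q s + gamma * x s).
  assert (HD : forall s, T < s < t -> is_derive x s (Fv s - gamma * x s)).
  { intros s Hs. unfold Fv. replace (Q s + gamma * x s - gamma * x s) with (Q s) by ring.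
    apply x_deriv. lra. }
  assert (HC : forall s, T <= s <= t -> continuous x s) by (intros; apply x_cont).
  assert (HB : forall s, T < s < t -> 0 <= Fv s <= beta * (vU / v0) * gU).
  { intros s Hs. unfold Fv. rewrite Q_split by lra.
    replace (beta * exp (- mu * (s - tau (V s))) * (v (x s) / v (Y (tau (V s)))) * g (Y (tau (V s))) -
      gamma * x s + gamma * x s) with (beta * exp (- mu * (s - tau (V s))) * (v (x s) / v (Y (tau (V s)))) * g (Y (tau (V s)))) by ring.
    apply prodA_bounds; [| apply hvb | apply hvb | apply gpos].
    pose proof (E_bound s (V s)) as HE. unfold ct in HE. rewrite clamp_id in HE by lra. exact HE. }
  pose proof (compare_up x Fv gamma T t (beta * (vU / v0) * gU) hgamma (proj1 Ht) HD HC (fun s Hs => proj2 (HB s Hs))).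
  pose proof (compare_down x Fv gamma T t 0 hgamma (proj1 Ht) HD HC (fun s Hs => proj1 (HB s Hs))).
  rewrite xT in H, H0. pose proof (Y_bnd T). apply Rabs_le_between in H1.
  set (e := exp (- gamma * (t - T))) in *.
  assert (0 < e <= 1). { split. apply exp_pos. unfold e. replace (- gamma * (t - T)) with (- (gamma * (t - T))) by ring.
    apply exp_le1. nra. }
  assert (beta * (vU / v0) * gU / gamma <= M). { replace (beta * (vU / v0) * gU) with (beta * gU * (vU / v0)) by ring. auto. }
  assert (0 <= beta * (vU / v0) * gU / gamma).
  { pose proof (Rdiv_lt_0_compat vU v0 vU_pos hv0). pose proof gU_pos.
    apply Rlt_le, Rdiv_lt_0_compat; [|lra]. apply Rmult_lt_0_compat; [apply Rmult_lt_0_compat|]; lra. }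
  replace (0 / gamma) with 0 in H0 by (field; lra).
  apply Rabs_le_between. split; nra.
Qed.


Definition Ynew s := Y (Rmin s T) + x (ct s) - Y T.

Lemma min_clamp_lip s1 s2 : Rabs (Rmin s1 T - Rmin s2 T) + Rabs (ct s1 - ct s2) <= Rabs (s1 - s2).
Proof.
  pose proof k_pos. unfold ct, clamp, Rmax, Rmin.
  repeat destruct (Rle_dec _ _); unfold Rabs; repeat destruct (Rcase_abs _); lra.
Qed.

Lemma Rmin_lip s1 s2 : Rabs (Rmin s1 T - Rmin s2 T) <= 1 * Rabs (s1 - s2).
Proof. pose proof (min_clamp_lip s1 s2). pose proof (Rabs_pos (ct s1 - ct s2)). lra. Qed.

Lemma Ynew_le s : s <= T -> Ynew s = Y s.
Proof. intros H. unfold Ynew. rewrite Rmin_left by auto. unfold ct.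
  replace (clamp T (T + k) s) with T. rewrite xT. ring.
  unfold clamp, Rmax, Rmin. repeat destruct (Rle_dec _ _); pose proof k_pos; lra. Qed.

Lemma Ynew_ge s : T <= s <= T + k -> Ynew s = x s.
Proof. intros H. unfold Ynew. rewrite Rmin_right by lra. unfold ct. rewrite clamp_id by lra. ring. Qed.

Lemma Ynew_lip s1 s2 : Rabs (Ynew s1 - Ynew s2) <= K * Rabs (s1 - s2).
Proof.
  unfold Ynew. replace (Y (Rmin s1 T) + x (ct s1) - Y T - (Y (Rmin s2 T) + x (ct s2) - Y T))
    with ((Y (Rmin s1 T) - Y (Rmin s2 T)) + (x (ct s1) - x (ct s2))) by ring.
  eapply Rle_trans. apply Rabs_triang. pose proof (Y_lip (Rmin s1 T) (Rmin s2 T)).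
  pose proof (hxl (ct s1) (ct s2)). pose proof (min_clamp_lip s1 s2). pose proof Bf_pos.
  pose proof (Rabs_pos (ct s1 - ct s2)). unfold Bf, M1 in *.
  assert (Bf * Rabs (ct s1 - ct s2) <= K * Rabs (ct s1 - ct s2)) by (apply Rmult_le_compat_r; auto; unfold Bf, M1; lra).
  unfold Bf, M1 in H4. nra.
Qed.

Lemma Ynew_cont s : continuous Ynew s. Proof. apply (lip_cont Ynew K Ynew_lip). Qed.

Lemma Ynew_bnd s : Rabs (Ynew s) <= M.
Proof.
  destruct (Rle_dec s T). rewrite Ynew_le; auto. apply Y_bnd.
  unfold Ynew. rewrite Rmin_right by lra. replace (Y T + x (ct s) - Y T) with (x (ct s)) by ring.
  apply x_bound. pose proof k_pos. apply clamp_in. lra.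
Qed.

Lemma ident t : T <= t <= T + k -> GG (seg Ynew t) = Q t.
Proof.
  intros Ht. pose proof T_nn as HT. pose proof (r_pos a r v0 ha hv0 hr) as Hr.
  pose proof (V_range t Ht) as HV. set (tau0 := tau (V t)).
  pose proof (htau1 (V t)) as Ht0. fold tau0 in Ht0.
  assert (I1 : RInt (fun u => v (Ynew u)) tau0 T = a - V t).
  { rewrite <- htau3 by auto. fold tau0. apply RInt_ext. intros u Hu. rewrite Rmin_left, Rmax_right in Hu by lra.
    rewrite Ynew_le by lra. reflexivity. }
  assert (I2 : RInt (fun u => v (Ynew u)) T t = V t).
  { rewrite V_eq by auto. apply RInt_ext. intros u Hu. rewrite Rmin_left, Rmax_right in Hu by lra.
    rewrite Ynew_ge by lra. reflexivity. }
  assert (I3 : RInt (fun u => v (Ynew u)) tau0 t = a).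
  { rewrite <- (chasles_vZ v hvc Ynew tau0 T t (- r) t) by (auto; try (intros; apply Ynew_cont); lra).
    rewrite I1, I2. change (@eq R (a - V t + V t) a). ring. }
  set (u0 := t - tau0).
  assert (Hu0 : 0 < u0 < r).
  { pose proof (int_lower v0 vU v hvb hvc Ynew tau0 t ltac:(lra) (fun s _ => Ynew_cont s)).
    pose proof (int_upper v0 vU v hvb hvc Ynew tau0 t ltac:(lra) (fun s _ => Ynew_cont s)).
    rewrite I3 in H, H0. pose proof vU_pos. unfold u0. split.
    - destruct (Req_dec (t - tau0) 0). rewrite H2 in H0. lra. lra.
    - apply Rle_lt_trans with (a / v0); auto. apply (Rmult_le_reg_l v0); auto.
      replace (v0 * (a / v0)) with a by (field; lra). lra. }
  assert (Hd : delta a r v (seg Ynew t) = u0).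
  { apply (delta_val a r v0 vU v hv0 hvb hvc); auto.
    - intros; unfold seg. apply (continuous_comp (fun s => t + s) Ynew).
      apply (ex_derive_continuous (K:=R_AbsRing) (V:=R_NormedModule)). auto_derive. auto. apply Ynew_cont.
    - unfold seg. rewrite (RInt_shift (fun u => v (Ynew u))). unfold u0.
      replace (t + - (t - tau0)) with tau0 by ring. rewrite Rplus_0_r. auto.
      intros; apply vZ_cont; auto. apply Ynew_cont. }
  unfold GG, G. rewrite Hd. unfold seg. rewrite Rplus_0_r.
  replace (t + - u0) with tau0 by (unfold u0; ring).
  rewrite Ynew_ge by auto. rewrite Ynew_le by lra. rewrite Q_split by auto. fold tau0. unfold u0. reflexivity.
Qed.


Definition Fo s := GG (seg Y (clamp 0 T s)).
Definition Fn s := GG (seg Ynew (clamp 0 (T + k) s)).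

Lemma seg_cont (Z : R -> R) s : (forall u, continuous Z u) -> forall u, continuous (seg Z s) u.
Proof.
  intros HZ u. unfold seg. apply (continuous_comp (fun u => s + u) Z).
  apply (ex_derive_continuous (K:=R_AbsRing) (V:=R_NormedModule)). auto_derive. auto. apply HZ.
Qed.

Lemma GG_old c : c <= T -> GG (seg Ynew c) = GG (seg Y c).
Proof.
  intros Hc. symmetry. unfold GG. apply (G_ext a r v0 vU v ha hv0 hvb hvc hr).
  intros; apply seg_cont, Y_cont. intros u Hu. unfold seg. rewrite Ynew_le by lra. reflexivity.
Qed.

Lemma Fo_T : Fo T = Q T.
Proof. pose proof k_pos. pose proof T_nn. unfold Fo. rewrite clamp_id by lra. rewrite <- GG_old by lra.
  apply ident. lra. Qed.

Lemma Fn_form s : Fn s = Fo (Rmin s T) + Q (ct s) - Fo T.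
Proof.
  pose proof k_pos. pose proof T_nn. unfold Fn. destruct (Rle_dec s T).
  - rewrite Rmin_left by auto. replace (ct s) with T. rewrite Fo_T.
    replace (clamp 0 (T + k) s) with (clamp 0 T s). unfold Fo. rewrite GG_old. ring.
    pose proof (clamp_in 0 T s); lra.
    unfold clamp, Rmax, Rmin; repeat destruct (Rle_dec _ _); lra.
    unfold ct, clamp, Rmax, Rmin; repeat destruct (Rle_dec _ _); lra.
  - rewrite Rmin_right by lra. replace (clamp 0 (T + k) s) with (ct s).
    rewrite ident. ring. apply clamp_in; lra.
    unfold ct, clamp, Rmax, Rmin; repeat destruct (Rle_dec _ _); lra.
Qed.

Lemma Fo_cont s : continuous Fo s. Proof. unfold Fo. apply hGood. Qed.

Lemma Fn_cont s : continuous Fn s.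
Proof.
  eapply continuous_ext. intros; symmetry; apply Fn_form.
  apply continuity_pt_filterlim.
  apply (continuity_pt_minus (fun s => Fo (Rmin s T) + Q (ct s)) (fun _ => Fo T)).
  apply (continuity_pt_plus (fun s => Fo (Rmin s T)) (fun s => Q (ct s))).
  apply continuity_pt_filterlim. apply (continuous_comp (fun s => Rmin s T) Fo).
  apply (lip_cont _ 1). apply Rmin_lip. apply Fo_cont.
  apply continuity_pt_filterlim. apply (continuous_comp ct Q). apply clamp_cont. apply Q_cont.
  apply continuity_pt_filterlim. apply continuous_const.
Qed.

Lemma good_next : Good (T + k) Ynew.
Proof.
  pose proof k_pos. pose proof T_nn. destruct hGood as [_ [Hphi [_ [_ [Hint Hcont]]]]].
  split; [lra|]. split.
  { intros s Hs. rewrite Ynew_le by lra. auto. }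
  split; [apply Ynew_bnd|]. split; [apply Ynew_lip|]. split; [| exact Fn_cont].
  fold Fn.
  assert (E1 : forall t, 0 <= t <= T -> RInt Fn 0 t = RInt Fo 0 t).
  { intros t Ht. apply RInt_ext. rewrite Rmin_left, Rmax_right by lra. intros u Hu.
    rewrite Fn_form. rewrite Rmin_left by lra. replace (ct u) with T. rewrite Fo_T. rring.
    unfold ct, clamp, Rmax, Rmin; repeat destruct (Rle_dec _ _); lra. }
  intros t Ht. destruct (Rle_dec t T).
  - rewrite Ynew_le by auto. rewrite E1 by lra. apply Hint. lra.
  - rewrite Ynew_ge by lra. destruct (hint t) as [Hx _]. lra. rewrite Hx.
    rewrite (Hint T) by lra. fold Fo.
    assert (E2 : RInt (fun s => f1 s (x s) (V s)) T t = RInt Fn T t).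
    { apply RInt_ext. rewrite Rmin_left, Rmax_right by lra. intros u Hu.
      rewrite Fn_form. rewrite Rmin_right by lra. unfold ct. rewrite clamp_id by lra. fold (Q u). rring. }
    rewrite E2. rewrite <- E1 by lra.
    assert (E3 : RInt Fn 0 T + RInt Fn T t = RInt Fn 0 t).
    { apply (RInt_Chasles (V:=R_CompleteNormedModule)); apply ex_RInt_cont; apply Fn_cont. }
    rewrite <- E3. change (@eq R (phi 0 + RInt Fn 0 T + RInt Fn T t) (phi 0 + (RInt Fn 0 T + RInt Fn T t))). ring.
Qed.

End Sol.

End Step.


Lemma good_extend T Y : Good T Y -> exists Y', Good (T + k) Y' /\ forall s, s <= T -> Y' s = Y s.
Proof.
  intros HG. destruct (tau_exists a r v0 vU v ha hv0 hvb hvc hr Y T (Y_cont T Y HG) (T_nn T Y HG))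
    as [tau [H1 [H2 H3]]].
  assert (B1 : forall t x y, Rabs (f1 T Y tau t x y) <= Bf) by (intros; eapply f1_bound; eauto).
  assert (B2 : forall t x y, Rabs (f2 t x y) <= Bf) by (intros; eapply f2_bound; eauto).
  assert (L1' : forall t, lipf (f1 T Y tau t) L) by (intros; eapply f1_lip; eauto).
  assert (L2' : forall t, lipf (f2 t) L) by (intros; eapply f2_lip; eauto).
  assert (C1' : forall x y t, continuous (fun s => f1 T Y tau s x y) t) by (intros; eapply f1_cont; eauto).
  assert (C2' : forall x y t, continuous (fun s => f2 s x y) t) by (intros; eapply f2_cont; eauto).
  destruct (ode_exists T k L Bf (Y T) 0 (f1 T Y tau) f2 k_pos (L_nn) k_L B1 B2 L1' L2' C1' C2')
    as [x [V [Hx [HV Hint]]]].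
  exists (Ynew T Y x). split.
  - apply (good_next T Y tau HG H1 H2 H3 x V Hx HV Hint).
  - intros s Hs. apply (Ynew_le T Y tau x V Hint); auto.
Qed.

Lemma Sk n : INR n * k + k = INR (S n) * k. Proof. rewrite S_INR. ring. Qed.

Lemma good_cast T T' Y : T = T' -> Good T Y -> Good T' Y.
Proof. intros E; subst; auto. Qed.

Lemma good_base' : Good (INR 0 * k) (fun s => phi (clamp (- r) 0 s)).
Proof. simpl. rewrite Rmult_0_l. apply good_base. Qed.

Fixpoint seqY (n : nat) : {Y : R -> R | Good (INR n * k) Y} :=
  match n with
  | O => exist _ _ good_base'
  | S n => let (Y, HY) := seqY n in
      let e := constructive_indefinite_description _ (good_extend _ _ HY) in
      exist _ (proj1_sig e) (good_cast _ _ _ (Sk n) (proj1 (proj2_sig e)))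
  end.

Definition Yn n := proj1_sig (seqY n).
Lemma Yn_good n : Good (INR n * k) (Yn n). Proof. unfold Yn. destruct (seqY n); auto. Qed.

Lemma Yn_succ n s : s <= INR n * k -> Yn (S n) s = Yn n s.
Proof.
  intros Hs. unfold Yn. simpl. destruct (seqY n) as [Y HY]. simpl.
  destruct (constructive_indefinite_description _ (good_extend (INR n * k) Y HY)) as [Y' [H1 H2]].
  simpl. auto.
Qed.

Lemma Tn_nn n : 0 <= INR n * k. Proof. pose proof k_pos. pose proof (pos_INR n). nra. Qed.
Lemma Tn_mono n m : (n <= m)%nat -> INR n * k <= INR m * k.
Proof. intros. pose proof k_pos. apply Rmult_le_compat_r; [lra|]. apply le_INR; auto. Qed.

Lemma Yn_agree n m s : (n <= m)%nat -> s <= INR n * k -> Yn m s = Yn n s.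
Proof.
  intros Hnm Hs. induction Hnm. reflexivity.
  rewrite Yn_succ. auto. eapply Rle_trans; [exact Hs|]. apply Tn_mono; auto.
Qed.

Definition Nt (t : R) := Z.to_nat (up (t / k)).

Lemma INR_to_nat z : IZR z <= INR (Z.to_nat z).
Proof.
  destruct (Z_le_gt_dec 0 z).
  - rewrite INR_IZR_INZ. rewrite Z2Nat.id by auto. lra.
  - pose proof (pos_INR (Z.to_nat z)). assert (IZR z < 0) by (apply IZR_lt; lia). lra.
Qed.

Lemma Nt_bound t : t < INR (Nt t) * k.
Proof.
  unfold Nt. pose proof k_pos. destruct (archimed (t / k)) as [H1 _].
  pose proof (INR_to_nat (up (t / k))).
  apply (Rmult_lt_reg_r (/ k)). apply Rinv_0_lt_compat; auto.
  replace (INR (Z.to_nat (up (t / k))) * k * / k) with (INR (Z.to_nat (up (t / k)))) by (field; lra).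
  unfold Rdiv in H1. lra.
Qed.

Definition Xg t := Yn (Nt t) t.

Lemma Xg_eq m t : t <= INR m * k -> Xg t = Yn m t.
Proof.
  intros Ht. unfold Xg. pose proof (Nt_bound t). destruct (le_le_S_dec (Nt t) m) as [Hle|Hlt].
  - symmetry. apply Yn_agree; auto. lra.
  - apply Yn_agree; auto. lia.
Qed.

Hypothesis (hXG : in_XG beta mu gamma a r g v phi dphi).

Lemma phi_wd s : - r <= s <= 0 -> wd (Iseg r) phi (dphi s) s.
Proof. intros. apply wd_of. apply hXG. auto. Qed.
Lemma dphi_wc s : - r <= s <= 0 -> wc (Iseg r) dphi s.
Proof. intros. apply wc_of. apply hXG. auto. Qed.

Definition Fm m s := GG (seg (Yn m) (clamp 0 (INR m * k) s)).
Lemma Yn_int m t : 0 <= t <= INR m * k -> Yn m t = phi 0 + RInt (Fm m) 0 t.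
Proof. intros. apply (Yn_good m). auto. Qed.
Lemma Fm_cont m x : continuous (Fm m) x.
Proof. apply (Yn_good m). Qed.
Lemma Yn_cont m s : continuous (Yn m) s.
Proof. apply (lip_cont _ K). apply (Yn_good m). Qed.
Lemma Yn_phi m s : - r <= s <= 0 -> Yn m s = phi s.
Proof. intros. apply (Yn_good m). auto. Qed.

Lemma Xg_phi s : - r <= s <= 0 -> Xg s = phi s.
Proof. intros. rewrite (Xg_eq 0). apply Yn_phi; auto. simpl. lra. Qed.

Lemma GG_Yn_X m s : s <= INR m * k -> GG (seg (Yn m) s) = GG (seg Xg s).
Proof.
  intros Hs. unfold GG. apply (G_ext a r v0 vU v ha hv0 hvb hvc hr).
  intros; apply seg_cont, Yn_cont. intros u Hu. unfold seg. rewrite (Xg_eq m). auto. lra.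
Qed.

Lemma Fm_X m s : 0 <= s <= INR m * k -> Fm m s = GG (seg Xg s).
Proof. intros Hs. unfold Fm. rewrite clamp_id by auto. apply GG_Yn_X. lra. Qed.

Definition dX t := if Rlt_dec t 0 then dphi t else GG (seg Xg t).

Lemma GG_X0 : GG (seg Xg 0) = dphi 0.
Proof.
  pose proof (r_pos a r v0 ha hv0 hr).
  rewrite <- (GG_Yn_X 0) by (simpl; lra). destruct hXG as [_ E]. rewrite E. unfold GG.
  apply (G_ext a r v0 vU v ha hv0 hvb hvc hr).
  intros; apply seg_cont, Yn_cont. intros u Hu. unfold seg. rewrite Rplus_0_l. apply Yn_phi; auto.
Qed.

Lemma dX_pos t : 0 <= t -> dX t = GG (seg Xg t).
Proof. intros. unfold dX. destruct (Rlt_dec t 0); [lra| auto]. Qed.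
Lemma dX_neg t : t <= 0 -> dX t = dphi t.
Proof. intros. unfold dX. destruct (Rlt_dec t 0); auto. assert (t = 0) by lra. subst. apply GG_X0. Qed.

Lemma m_after t : 0 <= t -> exists m, (1 <= m)%nat /\ t < INR m * k.
Proof.
  intros Ht. exists (S (Nt t)). split. lia. pose proof (Nt_bound t). pose proof k_pos.
  rewrite S_INR. lra.
Qed.

Lemma Xg_wd s : - r <= s -> wd (fun t => - r <= t) Xg (dX s) s.
Proof.
  intros Hs. pose proof k_pos. destruct (Rtotal_order s 0) as [Hn|[Hz|Hp]].
  - rewrite dX_neg by lra. apply (wd_transfer _ (Iseg r) Xg phi (dphi s) s (- s)); auto. lra.
    apply phi_wd; lra. intros h Hh Hhd HD. apply Rabs_lt_between in Hhd.
    split. unfold Iseg; lra. apply Xg_phi. lra. apply Xg_phi. lra.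
  - subst. rewrite dX_neg by lra. apply wd_lr.
    + apply (wd_transfer _ (Iseg r) Xg phi (dphi 0) 0 1); auto. lra. apply phi_wd.
      pose proof (r_pos a r v0 ha hv0 hr); lra.
      intros h Hh Hhd [HD1 HD2]. rewrite Rplus_0_l in *. split. unfold Iseg; lra. apply Xg_phi. lra.
      apply Xg_phi. pose proof (r_pos a r v0 ha hv0 hr); lra.
    + assert (Hd : is_derive (fun u => phi 0 + RInt (Fm 1) 0 u) 0 (Fm 1 0)).
      { apply (int_deriv _ (Fm 1) (phi 0) 0 (-1) 1). lra. intros; auto. apply Fm_cont. }
      rewrite Fm_X in Hd by (simpl; lra). rewrite GG_X0 in Hd.
      apply (wd_transfer _ (fun _ => True) Xg (fun u => phi 0 + RInt (Fm 1) 0 u) (dphi 0) 0 k); auto.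
      apply derive_wd; auto.
      intros h Hh Hhd [HD1 HD2]. rewrite Rplus_0_l in *. split; auto. rewrite (Xg_eq 1).
      apply Yn_int. simpl. apply Rabs_lt_between in Hhd. lra. simpl. apply Rabs_lt_between in Hhd. lra.
      rewrite (Xg_eq 1) by (simpl; lra). rewrite (RInt_point (V:=R_CompleteNormedModule)).
      rewrite Yn_phi by (pose proof (r_pos a r v0 ha hv0 hr); lra). unfold zero; simpl. ring.
  - destruct (m_after s) as [m [Hm Hsm]]. lra. rewrite dX_pos by lra.
    assert (Hd : is_derive Xg s (Fm m s)).
    { apply (int_deriv Xg (Fm m) (phi 0) 0 0 (INR m * k)). lra.
      intros u Hu. rewrite (Xg_eq m) by lra. apply Yn_int; auto. apply Fm_cont. }
    rewrite Fm_X in Hd by lra. apply derive_wd; auto.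
Qed.

Lemma dX_wc s : - r <= s -> wc (fun t => - r <= t) dX s.
Proof.
  intros Hs. pose proof k_pos. pose proof (r_pos a r v0 ha hv0 hr). destruct (Rtotal_order s 0) as [Hn|[Hz|Hp]].
  - apply (wc_transfer _ (Iseg r) dX dphi s (- s)); auto. lra. apply dphi_wc; lra.
    intros y Hy HD. apply Rabs_lt_between in Hy. split. unfold Iseg; lra. apply dX_neg; lra.
    apply dX_neg; lra.
  - subst. apply wc_lr.
    + apply (wc_transfer _ (Iseg r) dX dphi 0 1); auto. lra. apply dphi_wc; lra.
      intros y Hy [HD1 HD2]. split. unfold Iseg; lra. apply dX_neg; lra. apply dX_neg; lra.
    + apply (wc_transfer _ (fun _ => True) dX (Fm 1) 0 k); auto. apply cont_wc, Fm_cont.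
      intros y Hy [HD1 HD2]. apply Rabs_lt_between in Hy. split; auto. rewrite dX_pos by lra.
      rewrite Fm_X; auto. simpl; lra.
      rewrite dX_pos by lra. rewrite Fm_X; auto. simpl; lra.
  - destruct (m_after s) as [m [Hm Hsm]]. lra.
    apply (wc_transfer _ (fun _ => True) dX (Fm m) s (Rmin s (INR m * k - s))); auto.
    apply Rmin_pos; lra. apply cont_wc, Fm_cont.
    intros y Hy HD. pose proof (Rmin_l s (INR m * k - s)). pose proof (Rmin_r s (INR m * k - s)).
    apply Rabs_lt_between in Hy. split; auto. rewrite dX_pos by lra. rewrite Fm_X; auto. lra.
    rewrite dX_pos by lra. rewrite Fm_X; auto. lra.
Qed.

Lemma global_exists : global_solution beta mu gamma a r g v phi Xg dX.
Proof.
  split; [split|split].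
  - intros s Hs. apply of_wd. apply Xg_wd; auto.
  - intros s Hs. apply of_wc. apply dX_wc; auto.
  - intros s Hs. apply Xg_phi; auto.
  - intros t Ht. apply dX_pos. lra.
Qed.

End Main.

Section Props.
Variables (beta mu gamma a r g0 gU v0 vU : R) (g v phi x dx : R -> R).
Hypotheses (hbeta : 0 < beta) (hmu : 0 < mu) (hgamma : 0 < gamma) (ha : 0 < a)
  (hv0 : 0 < v0) (hvb : forall x, v0 <= v x <= vU) (hr : a / v0 < r)
  (hg0 : 0 < g0) (hgb : forall x, g0 <= g x <= gU) (hvc : forall x, continuous v x)
  (hsol : global_solution beta mu gamma a r g v phi x dx).

Lemma sol_deriv t : 0 < t -> is_derive x t (dx t).
Proof.
  intros Ht. destruct hsol as [[Hd _] _]. pose proof (r_pos a r v0 ha hv0 hr).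
  apply (wd_derive (fun u => - r <= u) x (dx t) t (t + r)). lra.
  intros y Hy. apply Rabs_lt_between in Hy. lra. apply wd_of. apply Hd. lra.
Qed.

Lemma sol_cont t : - r < t -> continuous x t.
Proof.
  intros Ht. destruct hsol as [[Hd _] _].
  apply (wc_cont (fun u => - r <= u) x t (t + r)). lra.
  intros y Hy. apply Rabs_lt_between in Hy. lra. eapply wd_wc. apply wd_of. apply Hd. lra.
Qed.

Definition Fs t := G beta mu gamma a r g v (seg x t) + gamma * x t.

Lemma Fs_bounds t : 0 < t ->
  beta * (v0 / vU) * exp (- mu * a / v0) * g0 <= Fs t <= beta * gU * (vU / v0).
Proof.
  intros Ht. pose proof (r_pos a r v0 ha hv0 hr).
  assert (Hc : forall s, - r <= s <= 0 -> continuous (seg x t) s).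
  { intros s Hs. unfold seg. apply (continuous_comp (fun u => t + u) x).
    apply (ex_derive_continuous (K:=R_AbsRing) (V:=R_NormedModule)). auto_derive. auto.
    apply sol_cont. lra. }
  destruct (delta_spec a r v0 vU v ha hv0 hvb hvc hr (seg x t) Hc) as [[Hd1 Hd2] [_ Hd3]].
  set (d := delta a r v (seg x t)) in *.
  unfold Fs, G. fold d. unfold seg. rewrite Rplus_0_r.
  set (p := v (x t)). set (q := v (x (t + - d))). set (gg := g (x (t + - d))).
  replace (beta * exp (- mu * d) * (p / q) * gg - gamma * x t + gamma * x t) with
    (beta * exp (- mu * d) * (p / q) * gg) by ring.
  assert (Hp : v0 <= p <= vU) by apply hvb. assert (Hq : v0 <= q <= vU) by apply hvb.
  assert (Hg : g0 <= gg <= gU) by apply hgb.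
  assert (HE : exp (- mu * a / v0) <= exp (- mu * d) <= 1).
  { split.
    - assert (- mu * a / v0 <= - mu * d).
      { replace (- mu * a / v0) with (- mu * (a / v0)) by (field; lra). nra. }
      destruct (Req_dec (- mu * a / v0) (- mu * d)) as [E|E]. rewrite E; lra.
      left; apply exp_increasing; lra.
    - replace (- mu * d) with (- (mu * d)) by ring. apply exp_le1. nra. }
  assert (HE0 : 0 < exp (- mu * a / v0)) by apply exp_pos.
  assert (Hpq : v0 / vU <= p / q <= vU / v0).
  { assert (0 < / q) by (apply Rinv_0_lt_compat; lra).
    assert (/ vU <= / q) by (apply Rinv_le_contravar; lra).
    assert (/ q <= / v0) by (apply Rinv_le_contravar; lra).
    assert (0 < / vU) by (apply Rinv_0_lt_compat; lra).
    unfold Rdiv. split; nra. }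
  assert (0 < v0 / vU) by (apply Rdiv_lt_0_compat; lra).
  split.
  - apply Rmult_le_compat; try lra.
    + apply Rmult_le_pos; [apply Rmult_le_pos|]; lra.
    + replace (beta * exp (- mu * d) * (p / q)) with (beta * (p / q) * exp (- mu * d)) by ring.
      apply Rmult_le_compat; try lra. apply Rmult_le_pos; lra.
      apply Rmult_le_compat_l; lra.
  - replace (beta * gU * (vU / v0)) with (beta * 1 * (vU / v0) * gU) by ring.
    assert (0 <= beta * exp (- mu * d)) by nra.
    apply Rmult_le_compat; try lra. apply Rmult_le_pos; lra.
    apply Rmult_le_compat; try lra. apply Rmult_le_compat_l; lra.
Qed.

Lemma sol_compare t : 0 < t ->
  let e := exp (- gamma * (t - 0)) in
  (beta * (v0 / vU) * exp (- mu * a / v0) * g0) / gamma + (x 0 - (beta * (v0 / vU) * exp (- mu * a / v0) * g0) / gamma) * e <= x t /\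
  x t <= (beta * gU * (vU / v0)) / gamma + (x 0 - (beta * gU * (vU / v0)) / gamma) * e.
Proof.
  intros Ht e. pose proof (r_pos a r v0 ha hv0 hr).
  assert (HD : forall s, 0 < s < t -> is_derive x s (Fs s - gamma * x s)).
  { intros s Hs. replace (Fs s - gamma * x s) with (dx s). apply sol_deriv; lra.
    unfold Fs. destruct hsol as [_ [_ H3]]. rewrite H3 by lra. ring. }
  assert (HC : forall s, 0 <= s <= t -> continuous x s) by (intros; apply sol_cont; lra).
  split.
  - apply (compare_down x Fs gamma 0 t); auto; try lra. intros; apply Fs_bounds; lra.
  - apply (compare_up x Fs gamma 0 t); auto; try lra. intros; apply Fs_bounds; lra.
Qed.

End Props.

Lemma phi_facts (r : R) (phi dphi : R -> R) : 0 < r -> C1_on (Iseg r) phi dphi ->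
  (exists Mp, 0 <= Mp /\ forall s, Rabs (phi (clamp (- r) 0 s)) <= Mp) /\
  (exists Kp, 0 <= Kp /\ forall s1 s2, Rabs (phi (clamp (- r) 0 s1) - phi (clamp (- r) 0 s2)) <= Kp * Rabs (s1 - s2)).
Proof.
  intros Hr [Hd Hc].
  assert (Hwd : forall s, - r <= s <= 0 -> wd (Iseg r) phi (dphi s) s) by (intros; apply wd_of; apply Hd; auto).
  assert (Hwc : forall s, - r <= s <= 0 -> wc (Iseg r) dphi s) by (intros; apply wc_of; apply Hc; auto).
  assert (HY : forall x, continuous (fun s => phi (clamp (- r) 0 s)) x).
  { intros x. apply clamp_cont_wc. lra. intros s Hs. eapply wd_wc. apply Hwd; auto. }
  assert (HdY : forall x, continuous (fun s => dphi (clamp (- r) 0 s)) x).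
  { intros x. apply clamp_cont_wc. lra. intros s Hs. apply Hwc; auto. }
  split.
  - destruct (continuity_ab_maj (fun s => Rabs (phi (clamp (- r) 0 s))) (- r) 0) as [m [Hm1 Hm2]]. lra.
    { intros c Hc'. apply continuity_pt_filterlim. apply (continuous_comp (fun s => phi (clamp (- r) 0 s)) Rabs). apply HY. apply continuous_Rabs. }
    exists (Rabs (phi (clamp (- r) 0 m))). split. apply Rabs_pos. intros s.
    pose proof (Hm1 (clamp (- r) 0 s) (clamp_in (- r) 0 s ltac:(lra))). simpl in H.
    rewrite (clamp_id (- r) 0 (clamp (- r) 0 s)) in H by (apply clamp_in; lra). auto.
  - destruct (continuity_ab_maj (fun s => Rabs (dphi (clamp (- r) 0 s))) (- r) 0) as [m [Hm1 Hm2]]. lra.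
    { intros c Hc'. apply continuity_pt_filterlim. apply (continuous_comp (fun s => dphi (clamp (- r) 0 s)) Rabs). apply HdY. apply continuous_Rabs. }
    exists (Rabs (dphi (clamp (- r) 0 m))). split. apply Rabs_pos. intros s1 s2.
    set (c1 := clamp (- r) 0 s1). set (c2 := clamp (- r) 0 s2).
    assert (Hc1 : - r <= c1 <= 0) by (apply clamp_in; lra). assert (Hc2 : - r <= c2 <= 0) by (apply clamp_in; lra).
    destruct (MVT_gen (fun s => phi (clamp (- r) 0 s)) c2 c1 dphi) as [c [Hcc E]].
    + intros y Hy. assert (Hy' : - r < y < 0) by (revert Hy; unfold Rmin, Rmax; destruct Rle_dec; lra).
      assert (Hp : is_derive phi y (dphi y)).
      { apply (wd_derive (Iseg r) phi (dphi y) y (Rmin (y + r) (- y))). apply Rmin_pos; lra.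
        intros z Hz. pose proof (Rmin_l (y + r) (- y)). pose proof (Rmin_r (y + r) (- y)).
        apply Rabs_lt_between in Hz. unfold Iseg; lra. apply Hwd; lra. }
      eapply is_derive_ext_loc; [| exact Hp].
      assert (He : 0 < Rmin (y + r) (- y)) by (apply Rmin_pos; lra).
      pose proof (Rmin_l (y + r) (- y)). pose proof (Rmin_r (y + r) (- y)).
      set (mm := Rmin (y + r) (- y)) in *.
      exists (mkposreal _ He). intros z Hz. apply ball_R in Hz. change (Rabs (z - y) < mm) in Hz.
      apply Rabs_lt_between in Hz. rewrite clamp_id by lra. auto.
    + intros; apply continuity_pt_filterlim; apply HY.
    + rewrite (clamp_id (- r) 0 c1) in E by auto. rewrite (clamp_id (- r) 0 c2) in E by auto.
      rewrite E. rewrite Rabs_mult.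
      assert (Hcr : - r <= c <= 0) by (revert Hcc; unfold Rmin, Rmax; destruct Rle_dec; lra).
      pose proof (Hm1 c Hcr). simpl in H. rewrite clamp_id in H by auto.
      apply Rmult_le_compat; try apply Rabs_pos; auto.
      apply clamp_lip.
Qed.

Theorem proposition3p2
  (beta mu gamma a r g0 gU v0 vU : R) (g v : R -> R)
  (hbeta : 0 < beta) (hmu : 0 < mu) (hgamma : 0 < gamma) (ha : 0 < a)
  (hg : C1_R g) (hg0pos : 0 < g0)
  (hg0 : is_inf (fun y => exists x, y = g x) g0)
  (hgU : is_lub (fun y => exists x, y = g x) gU)
  (hv : C1_R v) (hv0 : 0 < v0) (hvb : forall x, v0 <= v x <= vU)
  (hr : a / v0 < r) :
  let dL := beta * (v0 / vU) * exp (- mu * a / v0) * g0 in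
  let dU := beta * gU * (vU / v0) in
  let Q := fun y => dL / gamma <= y <= dU / gamma in
  forall phi dphi : R -> R,
    in_XG beta mu gamma a r g v phi dphi ->
    (exists x dx : R -> R, global_solution beta mu gamma a r g v phi x dx) /\
    (forall x dx : R -> R, global_solution beta mu gamma a r g v phi x dx ->
      (forall N : R -> Prop, nbhd_of_set Q N ->
         exists t0, 0 <= t0 /\ forall t, t0 <= t -> N (x t)) /\
      ((forall s, Iseg r s -> Q (phi s)) -> forall t, 0 <= t -> Q (x t)) /\
      ((forall s, Iseg r s -> 0 < phi s) -> forall t, - r <= t -> 0 < x t)).
Proof.
  intros dL dU Q phi dphi HXG.
  assert (hgb : forall x, g0 <= g x <= gU).
  { intros x. split. apply hg0. eauto. apply hgU. eauto. }
  assert (hgc : forall x, continuous g x).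
  { destruct hg as [g' Hg']. intros x. apply (ex_derive_continuous (K:=R_AbsRing) (V:=R_NormedModule)). eexists; apply Hg'. }
  assert (hvc : forall x, continuous v x).
  { destruct hv as [v' Hv']. intros x. apply (ex_derive_continuous (K:=R_AbsRing) (V:=R_NormedModule)). eexists; apply Hv'. }
  pose proof (r_pos a r v0 ha hv0 hr) as Hr.
  assert (HdL : 0 < dL).
  { unfold dL. pose proof (hvb 0). pose proof (exp_pos (- mu * a / v0)).
    assert (0 < v0 / vU) by (apply Rdiv_lt_0_compat; lra).
    apply Rmult_lt_0_compat; [apply Rmult_lt_0_compat; [apply Rmult_lt_0_compat|]|]; lra. }
  assert (HLU : dL <= dU).
  { unfold dL, dU. pose proof (hvb 0). pose proof (hgb 0).
    assert (exp (- mu * a / v0) <= 1).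
    { replace (- mu * a / v0) with (- (mu * a / v0)) by (field; lra). apply exp_le1.
      apply Rlt_le, Rdiv_lt_0_compat; nra. }
    assert (v0 / vU <= vU / v0).
    { apply Rle_trans with 1. apply (Rmult_le_reg_r vU); [lra|]. unfold Rdiv. rewrite Rmult_assoc, Rinv_l by lra. lra.
      apply (Rmult_le_reg_r v0); [lra|]. unfold Rdiv. rewrite Rmult_assoc, Rinv_l by lra. lra. }
    pose proof (exp_pos (- mu * a / v0)).
    assert (0 < v0 / vU) by (apply Rdiv_lt_0_compat; lra).
    replace (beta * gU * (vU / v0)) with (beta * (vU / v0) * 1 * gU) by ring.
    set (E := exp (- mu * a / v0)) in *. set (P := v0 / vU) in *. set (U := vU / v0) in *.
    assert (beta * P <= beta * U) by nra. assert (0 <= beta * P) by nra.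
    assert (beta * P * E <= beta * U * 1) by nra. assert (0 <= beta * P * E) by nra. nra. }
  split.
  - destruct (phi_facts r phi dphi Hr (proj1 HXG)) as [[Mp [HMp0 HMp]] [Kp [HKp0 HKp]]].
    set (M := Rmax Mp (beta * gU * (vU / v0) / gamma)).
    assert (HM0 : 0 <= M) by (unfold M; eapply Rle_trans; [exact HMp0| apply Rmax_l]).
    destruct (C1_lip g (M + 1) hg ltac:(lra)) as [Lg [HLg0 HLg]].
    destruct (C1_lip v (M + 1) hv ltac:(lra)) as [Lv [HLv0 HLv]].
    set (K := Rmax Kp (beta * (vU / v0) * gU + gamma * (M + 1) + vU)).
    assert (HMdU : beta * gU * (vU / v0) / gamma <= M) by apply Rmax_r.
    assert (HKB : beta * (vU / v0) * gU + gamma * (M + 1) + vU <= K) by apply Rmax_r.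
    assert (HphiM : forall s, Rabs (phi (clamp (- r) 0 s)) <= M).
    { intros s. eapply Rle_trans. apply HMp. apply Rmax_l. }
    assert (HphiK : forall s1 s2, Rabs (phi (clamp (- r) 0 s1) - phi (clamp (- r) 0 s2)) <= K * Rabs (s1 - s2)).
    { intros s1 s2. eapply Rle_trans. apply HKp. apply Rmult_le_compat_r. apply Rabs_pos. apply Rmax_l. }
    do 2 eexists.
    eapply (global_exists beta mu gamma a r g0 gU v0 vU M K Lv Lg g v phi dphi); eauto.
  - intros x dx Hsol.
    pose proof (sol_compare beta mu gamma a r g0 gU v0 vU g v phi x dx hbeta hmu hgamma ha hv0 hvb hr hg0pos hgb hvc Hsol) as HC.
    fold dL dU in HC.
    assert (Hx0 : x 0 = phi 0) by (apply Hsol; unfold Iseg; lra).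
    assert (He : forall t, 0 < t -> 0 < exp (- gamma * (t - 0)) < 1).
    { intros t Ht. split. apply exp_pos. rewrite <- exp_0. apply exp_increasing. nra. }
    split; [|split].
    + intros N [O [HO [HQO HON]]].
      assert (HQL : Q (dL / gamma)).
      { unfold Q. split. lra. apply Rmult_le_compat_r. left; apply Rinv_0_lt_compat; lra. auto. }
      assert (HQU : Q (dU / gamma)).
      { unfold Q. split. apply Rmult_le_compat_r. left; apply Rinv_0_lt_compat; lra. auto. lra. }
      destruct (HO _ (HQO _ HQL)) as [[e1 He1] H1]. destruct (HO _ (HQO _ HQU)) as [[e2 He2] H2].
      simpl in H1, H2.
      set (e := Rmin e1 e2). assert (Hep : 0 < e) by (apply Rmin_pos; auto).
      pose proof (Rmin_l e1 e2). pose proof (Rmin_r e1 e2). fold e in H, H0.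
      set (C := Rabs (x 0 - dL / gamma) + Rabs (x 0 - dU / gamma)).
      assert (HC0 : 0 <= C) by (unfold C; pose proof (Rabs_pos (x 0 - dL / gamma)); pose proof (Rabs_pos (x 0 - dU / gamma)); lra).
      exists (C / (gamma * e) + 1). split.
      { assert (0 <= C / (gamma * e)) by (apply Rmult_le_pos; auto; left; apply Rinv_0_lt_compat; nra). lra. }
      intros t Ht.
      assert (Ht0 : 0 < t). { assert (0 <= C / (gamma * e)) by (apply Rmult_le_pos; auto; left; apply Rinv_0_lt_compat; nra). lra. }
      destruct (HC t Ht0) as [HL HU]. set (ex := exp (- gamma * (t - 0))) in *.
      assert (Hex : 0 < ex < 1) by (apply He; auto).
      assert (HCe : C * ex < e).
      { assert (ex <= / (1 + gamma * t)).
        { unfold ex. replace (- gamma * (t - 0)) with (- (gamma * t)) by ring. rewrite exp_Ropp.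
          apply Rinv_le_contravar. nra. apply exp_ineq1_le. }
        assert (C < e * (1 + gamma * t)).
        { assert (C / (gamma * e) < t) by lra.
          apply (Rmult_lt_compat_l (gamma * e)) in H4; [|nra].
          replace (gamma * e * (C / (gamma * e))) with C in H4 by (field; lra). nra. }
        apply Rle_lt_trans with (C * / (1 + gamma * t)). apply Rmult_le_compat_l; auto.
        apply (Rmult_lt_reg_r (1 + gamma * t)). nra.
        replace (C * / (1 + gamma * t) * (1 + gamma * t)) with C by (field; nra). lra. }
      assert (A1 : Rabs (x 0 - dL / gamma) * ex <= C * ex).
      { apply Rmult_le_compat_r. lra. unfold C. pose proof (Rabs_pos (x 0 - dU / gamma)). lra. }
      assert (A2 : Rabs (x 0 - dU / gamma) * ex <= C * ex).
      { apply Rmult_le_compat_r. lra. unfold C. pose proof (Rabs_pos (x 0 - dL / gamma)). lra. }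
      assert (B1 : - (Rabs (x 0 - dL / gamma) * ex) <= (x 0 - dL / gamma) * ex).
      { pose proof (Rabs_le_between' (x 0 - dL / gamma) 0 (Rabs (x 0 - dL / gamma))).
        assert (- Rabs (x 0 - dL / gamma) <= x 0 - dL / gamma) by (pose proof (Rle_abs (- (x 0 - dL / gamma))); rewrite Rabs_Ropp in *; lra).
        nra. }
      assert (B2 : (x 0 - dU / gamma) * ex <= Rabs (x 0 - dU / gamma) * ex).
      { apply Rmult_le_compat_r. lra. apply Rle_abs. }
      apply HON. destruct (Rlt_dec (x t) (dL / gamma)) as [Hlt|Hge].
      * apply H1. apply ball_R. rewrite Rabs_left by lra. lra.
      * destruct (Rlt_dec (dU / gamma) (x t)) as [Hgt|Hle].
        -- apply H2. apply ball_R. rewrite Rabs_right by lra. lra.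
        -- apply HQO. unfold Q. lra.
    + intros HQ t Ht. pose proof (HQ 0 ltac:(unfold Iseg; lra)) as HQ0. unfold Q in HQ0 |- *.
      rewrite <- Hx0 in HQ0. destruct (Rle_lt_or_eq_dec 0 t Ht) as [Hp|Hz].
      * destruct (HC t Hp) as [HL HU]. pose proof (He t Hp). set (ex := exp (- gamma * (t - 0))) in *.
        split; nra.
      * subst. lra.
    + intros Hpos t Ht. destruct (Rle_lt_dec t 0) as [Hn|Hp].
      * rewrite (proj1 (proj2 Hsol)) by (unfold Iseg; lra). apply Hpos. unfold Iseg; lra.
      * destruct (HC t Hp) as [HL HU]. pose proof (He t Hp). set (ex := exp (- gamma * (t - 0))) in *.
        pose proof (Hpos 0 ltac:(unfold Iseg; lra)). rewrite <- Hx0 in H0.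
        assert (0 < dL / gamma) by (apply Rdiv_lt_0_compat; lra). nra.
Unshelve. all: assumption. Qed.
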